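(* Under the hypotheses of the previous statement (i.e. $c>0$, $m+\frac d2>1$, $\phi_k$ a bounded real solution on $[-1,1]$ of $\big((1-\eta)(1+\eta)^{m+\frac d2}\phi_k'\big)'+\big(\alpha_k-\frac{c^2(1+\eta)}{8}\big)(1+\eta)^{m+\frac d2-1}\phi_k=0$ normalized by $\int_{-1}^1(1+t)^{m+\frac d2-1}|\phi_k(t)|^2dt=2^{m+\frac d2-1}$, and $\alpha_k>\frac{c^2}{4}$), we have $$\sup_{\eta\in[a_{m,d},1]}|\phi_k(\eta)|\le\frac{3\sqrt3}{2}\sqrt{2^{m+\frac d2+1}\big(m+\tfrac d2-1\big)}\;\alpha_k^{1/2},\qquad a_{m,d}=\frac{2m+d-2}{2m+d}.$$
   Context: This is the radial equation of ball prolate spheroidal wave functions $\psi(x)=r^m\phi_k(2r^2-1)Y(\hat x)$, where $\alpha_k=\frac14(\chi^{(m)}_k(c)-m(m+d))$ and $\chi^{(m)}_k(c)$ is the corresponding eigenvalue of $\mathcal{L}_c=-\nabla\cdot(1-\|x\|^2)\nabla-\Delta_0+c^2\|x\|^2$. *)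

(* Defs.v *)
From Stdlib Require Import Reals Lra.
From Coquelicot Require Import Coquelicot.
Open Scope R_scope.

(* Real power x^y with the convention 0^y = 0 (for x <= 0); only used with
   y > 0 at x = 0, and with x > 0 elsewhere, where it is Rpower x y. *)
Definition rpow (x y : R) : R := if Rle_dec x 0 then 0 else Rpower x y.

Definition beta_md (m d : nat) : R := INR m + INR d / 2.

Definition a_md (m d : nat) : R :=
  (2 * INR m + INR d - 2) / (2 * INR m + INR d).

Definition flux (m d : nat) (phi : R -> R) (y : R) : R :=
  (1 - y) * rpow (1 + y) (beta_md m d) * Derive phi y.

(* Main.v *)
Require Import Defs.
From Stdlib Require Import Reals Lra Lia Classical Arith.
From Coquelicot Require Import Coquelicot.
Open Scope R_scope.

Lemma exp_le_mono (x y : R) : x <= y -> exp x <= exp y.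
Proof. intros [H|H]; [left; now apply exp_increasing | subst; lra]. Qed.

Definition Ep (y x : R) : R := exp (y * ln (1 + x)).

Lemma Ep_pos y x : 0 < Ep y x.
Proof. apply exp_pos. Qed.

Lemma rpow_Ep y x : -1 < x -> rpow (1 + x) y = Ep y x.
Proof.
  intros H. unfold rpow, Ep, Rpower. destruct (Rle_dec (1 + x) 0); [lra|reflexivity].
Qed.

Lemma Ep_split y x : -1 < x -> Ep y x = (1 + x) * Ep (y - 1) x.
Proof.
  intros H. unfold Ep.
  replace (y * ln (1 + x)) with (ln (1 + x) + (y - 1) * ln (1 + x)) by ring.
  rewrite exp_plus, exp_ln; lra.
Qed.

Lemma Ep_mono y x1 x2 : 0 <= y -> -1 < x1 <= x2 -> Ep y x1 <= Ep y x2.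
Proof.
  intros Hy Hx. unfold Ep. apply exp_le_mono. apply Rmult_le_compat_l; auto.
  apply ln_le; lra.
Qed.

Lemma Ep_ge1 y x : 0 <= y -> 0 <= x -> 1 <= Ep y x.
Proof.
  intros Hy Hx. unfold Ep. rewrite <- exp_0 at 1. apply exp_le_mono.
  apply Rmult_le_pos; auto. rewrite <- ln_1 at 1. apply ln_le; lra.
Qed.

Lemma Ep_le_lin y x : 1 <= y -> -1 < x <= 0 -> Ep y x <= 1 + x.
Proof.
  intros Hy Hx. unfold Ep. rewrite <- (exp_ln (1 + x)) at 2 by lra.
  apply exp_le_mono.
  assert (ln (1 + x) <= 0). { replace 0 with (ln 1) by apply ln_1. apply ln_le; lra. }
  assert (0 <= (y - 1) * - ln (1 + x)) by (apply Rmult_le_pos; lra). lra.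
Qed.

Lemma is_derive_Ep y x : -1 < x -> is_derive (Ep y) x (y * Ep (y - 1) x).
Proof.
  intros H. unfold Ep.
  evar (l : R). assert (Hd : is_derive (fun x => exp (y * ln (1 + x))) x l).
  { subst l. auto_derive. lra. reflexivity. }
  subst l. replace (y * exp ((y - 1) * ln (1 + x))) with
   (y * (1 * / (1 + x)) * exp (y * ln (1 + x))). exact Hd.
  fold (Ep y x). fold (Ep (y-1) x). rewrite (Ep_split y x H). field. lra.
Qed.

Lemma cont_of_is_derive (f : R -> R) x l : is_derive f x l -> continuity_pt f x.
Proof.
  intros H. apply continuity_pt_filterlim.
  apply (ex_derive_continuous f x). now exists l.
Qed.

Lemma is_derive_plusR (f g : R -> R) x df dg : is_derive f x df -> is_derive g x dg ->
  is_derive (fun y => f y + g y) x (df + dg).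
Proof. intros H1 H2. exact (is_derive_plus f g x df dg H1 H2). Qed.

Lemma is_derive_minusR (f g : R -> R) x df dg : is_derive f x df -> is_derive g x dg ->
  is_derive (fun y => f y - g y) x (df - dg).
Proof. intros H1 H2. exact (is_derive_minus f g x df dg H1 H2). Qed.

Lemma is_derive_multR (f g : R -> R) x df dg : is_derive f x df -> is_derive g x dg ->
  is_derive (fun y => f y * g y) x (df * g x + f x * dg).
Proof. intros H1 H2. exact (is_derive_mult f g x df dg H1 H2 (fun a b => Rmult_comm a b)). Qed.

Lemma mvt_is (f df : R -> R) a b : a <= b ->
  (forall x, a <= x <= b -> is_derive f x (df x)) ->
  exists c, a <= c <= b /\ f b - f a = df c * (b - a).
Proof.
  intros Hab Hd.
  destruct (MVT_gen f a b df) as [c [Hc Heq]].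
  - intros x Hx. apply Hd. rewrite Rmin_left, Rmax_right in Hx; lra.
  - intros x Hx. apply (cont_of_is_derive f x (df x)). apply Hd.
    rewrite Rmin_left, Rmax_right in Hx; lra.
  - exists c. rewrite Rmin_left, Rmax_right in Hc; auto.
Qed.

Lemma mvt_bound_is (f df : R -> R) a b B : a <= b ->
  (forall x, a <= x <= b -> is_derive f x (df x)) ->
  (forall x, a <= x <= b -> Rabs (df x) <= B) ->
  Rabs (f b - f a) <= B * (b - a).
Proof.
  intros Hab Hd HB. destruct (mvt_is f df a b Hab Hd) as [c [Hc Heq]].
  rewrite Heq, Rabs_mult, (Rabs_right (b - a)) by lra.
  apply Rmult_le_compat_r; [lra|]. now apply HB.
Qed.

Lemma mono_is (f df : R -> R) a b : a <= b ->
  (forall x, a <= x <= b -> is_derive f x (df x)) ->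
  (forall x, a <= x <= b -> 0 <= df x) -> f a <= f b.
Proof.
  intros Hab Hd Hp. destruct (mvt_is f df a b Hab Hd) as [c [Hc Heq]].
  assert (0 <= df c * (b - a)) by (apply Rmult_le_pos; [apply Hp; lra | lra]). lra.
Qed.

Lemma mvt_bound_D (f : R -> R) a b B : a <= b ->
  (forall x, a <= x <= b -> ex_derive f x) ->
  (forall x, a <= x <= b -> Rabs (Derive f x) <= B) ->
  Rabs (f b - f a) <= B * (b - a).
Proof.
  intros Hab Hd HB. apply (mvt_bound_is f (Derive f)); auto.
  intros x Hx. now apply Derive_correct, Hd.
Qed.

Lemma mono_D (f : R -> R) a b : a <= b ->
  (forall x, a <= x <= b -> ex_derive f x) ->
  (forall x, a <= x <= b -> 0 <= Derive f x) -> f a <= f b.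
Proof.
  intros Hab Hd Hp. apply (mono_is f (Derive f)); auto.
  intros x Hx. now apply Derive_correct, Hd.
Qed.

Lemma log_div_right (f : R -> R) t k M : t < 1 -> 0 < k ->
  (forall s, t < s < 1 -> ex_derive f s /\ k / (1 - s) <= Derive f s) ->
  exists s, t < s < 1 /\ M < f s.
Proof.
  intros Ht Hk Hd.
  set (h := fun s => f s + k * ln (1 - s)).
  set (t1 := (t + 1) / 2).
  assert (Hmono : forall s, t1 <= s < 1 -> h t1 <= h s).
  { intros s Hs.
    apply (mono_is h (fun x => Derive f x + k * (-1 / (1 - x)))); [lra| |].
    - intros x Hx. unfold h. apply is_derive_plusR.
      + apply Derive_correct. apply Hd. unfold t1 in Hx. lra.
      + evar (l : R). assert (Hl : is_derive (fun x => k * ln (1 - x)) x l).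
        { subst l. auto_derive. lra. reflexivity. }
        subst l. replace (k * (-1 / (1 - x))) with (k * ((-1) * / (1 - x))). exact Hl.
        field. lra.
    - intros x Hx. destruct (Hd x) as [_ Hx2]. unfold t1 in Hx; lra.
      assert (k * (-1 / (1 - x)) = - (k / (1 - x))) by (field; lra). lra. }
  set (X := Rmax (- ln (1 - t1)) ((M - h t1) / k) + 1).
  exists (1 - exp (- X)).
  assert (H1 : exp (- X) < 1 - t1).
  { rewrite <- (exp_ln (1 - t1)) by (unfold t1; lra). apply exp_increasing.
    unfold X. pose proof (Rmax_l (- ln (1 - t1)) ((M - h t1) / k)). lra. }
  assert (Hs : t < 1 - exp (- X) < 1). { pose proof (exp_pos (- X)). unfold t1 in H1. lra. }
  split; auto.
  assert (Hh' : h t1 <= h (1 - exp (- X))) by (apply Hmono; lra).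
  assert (Heh : h (1 - exp (- X)) = f (1 - exp (- X)) - k * X).
  { unfold h. replace (1 - (1 - exp (- X))) with (exp (- X)) by ring.
    rewrite ln_exp. ring. }
  assert (HX : (M - h t1) / k + 1 <= X).
  { unfold X. pose proof (Rmax_r (- ln (1 - t1)) ((M - h t1) / k)). lra. }
  assert (k * ((M - h t1) / k + 1) <= k * X) by (apply Rmult_le_compat_l; lra).
  assert (k * ((M - h t1) / k + 1) = M - h t1 + k) by (field; lra).
  lra.
Qed.

Lemma log_div_left (f : R -> R) t k M : -1 < t -> 0 < k ->
  (forall s, -1 < s < t -> ex_derive f s /\ k / (1 + s) <= Derive f s) ->
  exists s, -1 < s < t /\ f s < M.
Proof.
  intros Ht Hk Hd.
  set (h := fun s => f s - k * ln (1 + s)).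
  set (t1 := (t - 1) / 2).
  assert (Hmono : forall s, -1 < s <= t1 -> h s <= h t1).
  { intros s Hs.
    apply (mono_is h (fun x => Derive f x - k * (1 / (1 + x)))); [lra| |].
    - intros x Hx. unfold h. apply is_derive_minusR.
      + apply Derive_correct. apply Hd. unfold t1 in Hx. lra.
      + evar (l : R). assert (Hl : is_derive (fun x => k * ln (1 + x)) x l).
        { subst l. auto_derive. lra. reflexivity. }
        subst l. replace (k * (1 / (1 + x))) with (k * (1 * / (1 + x))). exact Hl.
        field. lra.
    - intros x Hx. destruct (Hd x) as [_ Hx2]. unfold t1 in Hx; lra.
      assert (k * (1 / (1 + x)) = (k / (1 + x))) by (field; lra). lra. }
  set (X := Rmax (- ln (1 + t1)) ((h t1 - M) / k) + 1).
  exists (-1 + exp (- X)).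
  assert (H1 : exp (- X) < 1 + t1).
  { rewrite <- (exp_ln (1 + t1)) by (unfold t1; lra). apply exp_increasing.
    unfold X. pose proof (Rmax_l (- ln (1 + t1)) ((h t1 - M) / k)). lra. }
  assert (Hs : -1 < -1 + exp (- X) < t). { pose proof (exp_pos (- X)). unfold t1 in H1. lra. }
  split; auto.
  assert (Hh' : h (-1 + exp (- X)) <= h t1) by (apply Hmono; lra).
  assert (Heh : h (-1 + exp (- X)) = f (-1 + exp (- X)) + k * X).
  { unfold h. replace (1 + (-1 + exp (- X))) with (exp (- X)) by ring.
    rewrite ln_exp. ring. }
  assert (HX : (h t1 - M) / k + 1 <= X).
  { unfold X. pose proof (Rmax_r (- ln (1 + t1)) ((h t1 - M) / k)). lra. }
  assert (k * ((h t1 - M) / k + 1) <= k * X) by (apply Rmult_le_compat_l; lra).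
  assert (k * ((h t1 - M) / k + 1) = h t1 - M + k) by (field; lra).
  lra.
Qed.

Definition wf (b c al x : R) := (al - c ^ 2 * (1 + x) / 8) * Ep (b - 1) x.

Record Setup (b c al M : R) (phi fl : R -> R) : Prop := mkS {
  S_b : 3/2 <= b;
  S_al : c ^ 2 / 4 < al;
  S_M : forall x, -1 <= x <= 1 -> Rabs (phi x) <= M;
  S_dphi : forall x, -1 < x < 1 -> ex_derive phi x;
  S_dfl : forall x, -1 < x < 1 -> ex_derive fl x;
  S_fl : forall x, -1 < x < 1 -> fl x = (1 - x) * Ep b x * Derive phi x;
  S_ode : forall x, -1 < x < 1 -> Derive fl x = - wf b c al x * phi x }.


Lemma wf_bounds b c al x : c ^ 2 / 4 < al -> -1 < x < 1 ->
  0 < wf b c al x /\ wf b c al x <= al * Ep (b - 1) x.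
Proof.
  intros Hal Hx. unfold wf. pose proof (Ep_pos (b-1) x).
  assert (0 <= c ^ 2) by (apply pow2_ge_0).
  assert (c ^ 2 * (1 + x) <= c ^ 2 * 2) by (apply Rmult_le_compat_l; lra).
  assert (0 <= c ^ 2 * (1 + x)) by (apply Rmult_le_pos; lra).
  split.
  - apply Rmult_lt_0_compat; lra.
  - apply Rmult_le_compat_r; lra.
Qed.

Lemma wf_le b c al x : 3/2 <= b -> c ^ 2 / 4 < al -> -1 < x < 1 ->
  Rabs (wf b c al x) <= al * Ep (b - 1) 1.
Proof.
  intros Hb Hal Hx. destruct (wf_bounds b c al x Hal Hx) as [H1 H2].
  rewrite Rabs_right by lra. eapply Rle_trans; [exact H2|].
  assert (0 < al). { pose proof (pow2_ge_0 c). lra. }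
  apply Rmult_le_compat_l; [lra|]. apply Ep_mono; lra.
Qed.

Lemma dphi_eq b c al M phi fl x : Setup b c al M phi fl -> -1 < x < 1 ->
  Derive phi x = fl x / ((1 - x) * Ep b x).
Proof.
  intros S Hx. rewrite (S_fl _ _ _ _ _ _ S x Hx). field.
  split; [apply Rgt_not_eq, Ep_pos | lra].
Qed.

Lemma flux_right b c al M phi fl t B : Setup b c al M phi fl -> -1 < t < 1 ->
  (forall u, t <= u < 1 -> Rabs (Derive fl u) <= B) ->
  Rabs (fl t) <= B * (1 - t).
Proof.
  intros S Ht HB. pose proof (S_b _ _ _ _ _ _ S) as Hb3.
  destruct (Rle_or_lt (Rabs (fl t)) (B * (1 - t))) as [|Hlt]; auto. exfalso.
  set (delta := Rabs (fl t) - B * (1 - t)).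
  set (sg := if Rle_dec 0 (fl t) then 1 else -1).
  assert (Hsg : sg * fl t = Rabs (fl t) /\ Rabs sg = 1).
  { unfold sg; destruct (Rle_dec 0 (fl t)).
    - rewrite Rabs_right by lra. rewrite Rabs_R1. split; ring.
    - rewrite Rabs_left by lra. split; [ring|]. rewrite Rabs_left; lra. }
  set (E := Ep b 1).
  assert (HE : 0 < E) by apply Ep_pos.
  assert (Hdel : 0 < delta) by (unfold delta; lra).
  destruct (log_div_right (fun x => sg * phi x) t (delta / E) M) as [s [Hs Hf]]; try lra.
  - apply Rdiv_lt_0_compat; lra.
  - intros s Hs. split.
    + apply ex_derive_scal. apply (S_dphi _ _ _ _ _ _ S); lra.
    + rewrite Derive_scal. rewrite (dphi_eq b c al M phi fl s S) by lra.
      assert (Hfs : Rabs (fl s - fl t) <= B * (s - t)).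
      { apply mvt_bound_D; try lra.
        - intros x Hx. apply (S_dfl _ _ _ _ _ _ S); lra.
        - intros x Hx. apply HB. lra. }
      assert (Hsfs : delta <= sg * fl s).
      { assert (Habs : Rabs (sg * (fl s - fl t)) <= B * (s - t)).
        { rewrite Rabs_mult. destruct Hsg as [_ ->]. lra. }
        destruct Hsg as [Hs1 _].
        apply Rabs_le_between in Habs.
        assert (sg * (fl s - fl t) = sg * fl s - sg * fl t) by ring.
        assert (HB0 : 0 <= B) by (pose proof (HB t ltac:(lra)); pose proof (Rabs_pos (Derive fl t)); lra).
        assert (B * (s - t) <= B * (1 - t)) by (apply Rmult_le_compat_l; lra).
        unfold delta. lra. }
      assert (HEs : Ep b s <= E) by (apply Ep_mono; lra).
      pose proof (Ep_pos b s).
      replace (sg * (fl s / ((1 - s) * Ep b s))) with ((sg * fl s) / ((1 - s) * Ep b s))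
        by (field; lra).
      replace (delta / E / (1 - s)) with (delta / ((1 - s) * E)) by (field; lra).
      apply Rle_trans with (delta / ((1 - s) * Ep b s)).
      * apply Rmult_le_compat_l; [lra|]. apply Rinv_le_contravar.
        -- apply Rmult_lt_0_compat; lra.
        -- apply Rmult_le_compat_l; lra.
      * apply Rmult_le_compat_r; [|lra].
        left. apply Rinv_0_lt_compat, Rmult_lt_0_compat; lra.
  - assert (Hb : Rabs (phi s) <= M) by (apply (S_M _ _ _ _ _ _ S); lra).
    assert (Rabs (sg * phi s) = Rabs (phi s)) by (rewrite Rabs_mult; destruct Hsg as [_ ->]; ring).
    pose proof (Rle_abs (sg * phi s)). lra.
Qed.

Lemma flux_left b c al M phi fl t B : Setup b c al M phi fl -> -1 < t < 1 ->
  (forall u, -1 < u <= t -> Rabs (Derive fl u) <= B) ->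
  Rabs (fl t) <= B * (1 + t).
Proof.
  intros S Ht HB. pose proof (S_b _ _ _ _ _ _ S) as Hb3.
  destruct (Rle_or_lt (Rabs (fl t)) (B * (1 + t))) as [|Hlt]; auto. exfalso.
  set (delta := Rabs (fl t) - B * (1 + t)).
  set (sg := if Rle_dec 0 (fl t) then 1 else -1).
  assert (Hsg : sg * fl t = Rabs (fl t) /\ Rabs sg = 1).
  { unfold sg; destruct (Rle_dec 0 (fl t)).
    - rewrite Rabs_right by lra. rewrite Rabs_R1. split; ring.
    - rewrite Rabs_left by lra. split; [ring|]. rewrite Rabs_left; lra. }
  assert (Hdel : 0 < delta) by (unfold delta; lra).
  assert (HB0 : 0 <= B) by (pose proof (HB t ltac:(lra)); pose proof (Rabs_pos (Derive fl t)); lra).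
  destruct (log_div_left (fun x => sg * phi x) (Rmin t 0) (delta / 2) (- M)) as [s [Hs Hf]].
  - apply Rmin_case; lra.
  - lra.
  - intros s Hs. assert (Hs' : -1 < s < t /\ s < 0).
    { split; [split|]; try lra; pose proof (Rmin_l t 0); pose proof (Rmin_r t 0); lra. }
    split.
    + apply ex_derive_scal. apply (S_dphi _ _ _ _ _ _ S); lra.
    + rewrite Derive_scal. rewrite (dphi_eq b c al M phi fl s S) by lra.
      assert (Hfs : Rabs (fl t - fl s) <= B * (t - s)).
      { apply mvt_bound_D; try lra.
        - intros x Hx. apply (S_dfl _ _ _ _ _ _ S); lra.
        - intros x Hx. apply HB. lra. }
      assert (Hsfs : delta <= sg * fl s).
      { assert (Habs : Rabs (sg * (fl t - fl s)) <= B * (t - s)).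
        { rewrite Rabs_mult. destruct Hsg as [_ ->]. lra. }
        destruct Hsg as [Hs1 _].
        apply Rabs_le_between in Habs.
        assert (sg * (fl t - fl s) = sg * fl t - sg * fl s) by ring.
        assert (B * (t - s) <= B * (1 + t)) by (apply Rmult_le_compat_l; lra).
        unfold delta. lra. }
      assert (HEs : Ep b s <= 1 + s) by (apply Ep_le_lin; lra).
      pose proof (Ep_pos b s).
      replace (sg * (fl s / ((1 - s) * Ep b s))) with ((sg * fl s) / ((1 - s) * Ep b s))
        by (field; lra).
      replace (delta / 2 / (1 + s)) with (delta / (2 * (1 + s))) by (field; lra).
      apply Rle_trans with (delta / ((1 - s) * Ep b s)).
      * apply Rmult_le_compat_l; [lra|]. apply Rinv_le_contravar.
        -- apply Rmult_lt_0_compat; lra.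
        -- apply Rmult_le_compat; lra.
      * apply Rmult_le_compat_r; [|lra].
        left. apply Rinv_0_lt_compat, Rmult_lt_0_compat; lra.
  - assert (Hs' : -1 < s < t) by (split; try lra; pose proof (Rmin_l t 0); lra).
    assert (Hb : Rabs (phi s) <= M) by (apply (S_M _ _ _ _ _ _ S); lra).
    assert (Rabs (sg * phi s) = Rabs (phi s)) by (rewrite Rabs_mult; destruct Hsg as [_ ->]; ring).
    pose proof (Rle_abs (- (sg * phi s))). rewrite Rabs_Ropp in H0. lra.
Qed.

Lemma S_M0 b c al M phi fl : Setup b c al M phi fl -> 0 <= M.
Proof. intros S. pose proof (S_M _ _ _ _ _ _ S 0 ltac:(lra)). pose proof (Rabs_pos (phi 0)). lra. Qed.

Lemma S_al0 b c al M phi fl : Setup b c al M phi fl -> 0 < al.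
Proof. intros S. pose proof (S_al _ _ _ _ _ _ S). pose proof (pow2_ge_0 c). lra. Qed.

Lemma dfl_bound b c al M phi fl u : Setup b c al M phi fl -> -1 < u < 1 ->
  Rabs (Derive fl u) <= al * Ep (b - 1) 1 * Rabs (phi u).
Proof.
  intros S Hu. rewrite (S_ode _ _ _ _ _ _ S u Hu).
  rewrite Rabs_mult, Rabs_Ropp. apply Rmult_le_compat_r; [apply Rabs_pos|].
  apply wf_le; [apply (S_b _ _ _ _ _ _ S) | apply (S_al _ _ _ _ _ _ S) | auto].
Qed.

Lemma flux_right_M b c al M phi fl t : Setup b c al M phi fl -> -1 < t < 1 ->
  Rabs (fl t) <= al * Ep (b - 1) 1 * M * (1 - t).
Proof.
  intros S Ht. apply (flux_right b c al M phi fl t); auto.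
  intros u Hu. eapply Rle_trans; [apply (dfl_bound b c al M phi fl u S); lra|].
  apply Rmult_le_compat_l. { pose proof (S_al0 _ _ _ _ _ _ S). pose proof (Ep_pos (b-1) 1). nra. }
  apply (S_M _ _ _ _ _ _ S); lra.
Qed.

Lemma flux_left_M b c al M phi fl t : Setup b c al M phi fl -> -1 < t < 1 ->
  Rabs (fl t) <= al * Ep (b - 1) 1 * M * (1 + t).
Proof.
  intros S Ht. apply (flux_left b c al M phi fl t); auto.
  intros u Hu. eapply Rle_trans; [apply (dfl_bound b c al M phi fl u S); lra|].
  apply Rmult_le_compat_l. { pose proof (S_al0 _ _ _ _ _ _ S). pose proof (Ep_pos (b-1) 1). nra. }
  apply (S_M _ _ _ _ _ _ S); lra.
Qed.

Lemma dphi_from_flux b c al M phi fl u K P : Setup b c al M phi fl -> -1 < u < 1 ->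
  Rabs (fl u) <= K * (1 - u) -> 0 < P -> P <= Ep b u -> Rabs (Derive phi u) <= K / P.
Proof.
  intros S Hu HK HP HPE. rewrite (dphi_eq b c al M phi fl u S Hu).
  pose proof (Ep_pos b u).
  unfold Rdiv. rewrite Rabs_mult, Rabs_Rinv by (apply Rgt_not_eq, Rmult_lt_0_compat; lra).
  rewrite (Rabs_right ((1 - u) * Ep b u)) by (left; apply Rmult_lt_0_compat; lra).
  assert (HK0 : 0 <= K). { pose proof (Rabs_pos (fl u)). destruct (Rle_or_lt 0 K); auto.
    assert (K * (1 - u) < 0) by (apply Rmult_neg_pos; lra). lra. }
  apply Rle_trans with (K * (1 - u) * / ((1 - u) * Ep b u)).
  - apply Rmult_le_compat_r; auto. left; apply Rinv_0_lt_compat, Rmult_lt_0_compat; lra.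
  - replace (K * (1 - u) * / ((1 - u) * Ep b u)) with (K / Ep b u) by (field; lra).
    unfold Rdiv. apply Rmult_le_compat_l; auto. apply Rinv_le_contravar; lra.
Qed.

Lemma dphi_bound_pos b c al M phi fl u : Setup b c al M phi fl -> 0 <= u < 1 ->
  Rabs (Derive phi u) <= al * Ep (b - 1) 1 * M.
Proof.
  intros S Hu. replace (al * Ep (b - 1) 1 * M) with (al * Ep (b - 1) 1 * M / 1) by field.
  apply (dphi_from_flux b c al M phi fl u); auto; try lra.
  - apply (flux_right_M b c al M phi fl); auto; lra.
  - apply Ep_ge1; [pose proof (S_b _ _ _ _ _ _ S); lra | lra].
Qed.

Lemma phi_lip_pos b c al M phi fl x y : Setup b c al M phi fl -> 0 <= x <= y -> y < 1 ->
  Rabs (phi y - phi x) <= al * Ep (b - 1) 1 * M * (y - x).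
Proof.
  intros S Hx Hy. apply mvt_bound_D; try lra.
  - intros z Hz. apply (S_dphi _ _ _ _ _ _ S); lra.
  - intros z Hz. apply (dphi_bound_pos b c al M phi fl z S); lra.
Qed.

Lemma sup_exists (D : R -> Prop) (f : R -> R) M :
  (forall x, D x -> Rabs (f x) <= M) ->
  exists H, 0 <= H /\ (forall x, D x -> Rabs (f x) <= H) /\
    (forall H', 0 <= H' -> (forall x, D x -> Rabs (f x) <= H') -> H <= H').
Proof.
  intros HM.
  set (E := fun y => y = 0 \/ exists x, D x /\ y = Rabs (f x)).
  assert (Hb : bound E).
  { exists (Rmax M 0). intros y [->|[x [Hx ->]]]. apply Rmax_r.
    eapply Rle_trans; [apply HM; auto| apply Rmax_l]. }
  destruct (completeness E Hb (ex_intro _ 0 (or_introl eq_refl))) as [H [Hub Hlub]].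
  exists H. split; [apply Hub; now left|]. split.
  - intros x Hx. apply Hub. right. now exists x.
  - intros H' H0 HH'. apply Hlub. intros y [->|[x [Hx ->]]]; auto.
Qed.

Lemma Derive_loc_zero (f : R -> R) l r x : l < x < r ->
  (forall y, l < y < r -> f y = 0) -> Derive f x = 0.
Proof.
  intros Hx Hf. apply is_derive_unique.
  apply (is_derive_ext_loc (fun _ => 0)).
  - assert (Hd : 0 < Rmin (x - l) (r - x)) by (apply Rmin_case; lra).
    exists (mkposreal _ Hd). intros y Hy. simpl in Hy.
    unfold ball in Hy; simpl in Hy; unfold AbsRing_ball, abs, minus, plus, opp in Hy; simpl in Hy.
    symmetry. apply Hf. pose proof (Rmin_l (x - l) (r - x)). pose proof (Rmin_r (x - l) (r - x)).
    apply Rabs_lt_between in Hy. lra.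
  - apply (is_derive_const 0).
Qed.

Definition Gf (b : R) (phi fl : R -> R) (x : R) : R :=
  phi x * fl x - (1 - x) * Ep b x * phi x ^ 2 / (x - (b - 1) / (b + 1)).

Lemma Gf_deriv b c al M phi fl x : Setup b c al M phi fl -> -1 < x < 1 ->
  x <> (b - 1) / (b + 1) ->
  exists g, is_derive (Gf b phi fl) x g /\
    (b + 1 - al + c ^ 2 * (1 + x) / 8) * Ep (b - 1) x * phi x ^ 2 <= g.
Proof.
  intros S Hx Hx0. pose proof (S_b _ _ _ _ _ _ S) as Hb.
  assert (Hpsi : x - (b - 1) / (b + 1) <> 0) by lra.
  eexists; split.
  { unfold Gf, Ep. auto_derive.
    - repeat split; try apply (S_dphi _ _ _ _ _ _ S); try apply (S_dfl _ _ _ _ _ _ S); auto; lra.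
    - reflexivity. }
  change (Derive (fun x1 => phi x1) x) with (Derive phi x).
  change (Derive (fun x1 => fl x1) x) with (Derive fl x).
  change (exp (b * ln (1 + x))) with (Ep b x).
  rewrite (S_ode _ _ _ _ _ _ S x Hx).
  rewrite (S_fl _ _ _ _ _ _ S x Hx).
  rewrite (Ep_split b x) by lra. unfold wf.
  set (E := Ep (b - 1) x). set (dp := Derive phi x). set (p := phi x).
  set (psi := x - (b - 1) / (b + 1)).
  assert (HE : 0 < E) by apply Ep_pos.
  assert (Hpsi' : psi <> 0) by exact Hpsi.
  assert (Heq : forall lhs, lhs = (1 - x) * (1 + x) * E * (dp - p / psi) ^ 2 +
      (b + 1 - al + c ^ 2 * (1 + x) / 8) * E * p ^ 2 -> (b + 1 - al + c ^ 2 * (1 + x) / 8) * E * p ^ 2 <= lhs).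
  { intros lhs ->. assert (0 <= (1 - x) * (1 + x) * E * (dp - p / psi) ^ 2).
    { apply Rmult_le_pos; [|apply pow2_ge_0]. apply Rmult_le_pos; [|lra]. apply Rmult_le_pos; lra. }
    lra. }
  apply Heq. unfold psi. field. split; [lra|split;[|lra]].
  intros H0. apply Hx0. field_simplify_eq; lra.
Qed.

Lemma x0_bounds b : 3/2 <= b -> 0 < (b - 1) / (b + 1) < 1.
Proof. intros Hb. split. apply Rdiv_lt_0_compat; lra.
  apply (Rmult_lt_reg_r (b + 1)); [lra|]. unfold Rdiv. rewrite Rmult_assoc, Rinv_l; lra. Qed.

Lemma Gf_Derive b c al M phi fl x : Setup b c al M phi fl -> al < b + 1 -> -1 < x < 1 ->
  x <> (b - 1) / (b + 1) ->
  ex_derive (Gf b phi fl) x /\ 0 <= Derive (Gf b phi fl) x /\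
  (b + 1 - al + c ^ 2 * (1 + x) / 8) * Ep (b - 1) x * phi x ^ 2 <= Derive (Gf b phi fl) x.
Proof.
  intros S Hal Hx Hx0. destruct (Gf_deriv b c al M phi fl x S Hx Hx0) as [g [Hg Hlow]].
  rewrite (is_derive_unique _ _ _ Hg). split; [now exists g|]. split; auto.
  eapply Rle_trans; [|exact Hlow].
  pose proof (Ep_pos (b-1) x). pose proof (pow2_ge_0 c). pose proof (pow2_ge_0 (phi x)).
  assert (0 <= c ^ 2 * (1 + x)) by (apply Rmult_le_pos; lra).
  apply Rmult_le_pos; auto. apply Rmult_le_pos; lra.
Qed.

Lemma Gf_mono b c al M phi fl y1 y2 : Setup b c al M phi fl -> al < b + 1 -> y1 <= y2 ->
  ((b - 1) / (b + 1) < y1 /\ y2 < 1 \/ -1 < y1 /\ y2 < (b - 1) / (b + 1)) ->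
  Gf b phi fl y1 <= Gf b phi fl y2.
Proof.
  intros S Hal H12 Hy. pose proof (x0_bounds b (S_b _ _ _ _ _ _ S)).
  apply mono_D; auto.
  - intros x Hx. apply (Gf_Derive b c al M phi fl x S Hal); lra.
  - intros x Hx. apply (Gf_Derive b c al M phi fl x S Hal); lra.
Qed.

Lemma frac_lt1 a C : 0 < C -> a < C -> a / C < 1.
Proof. intros HC Ha. apply (Rmult_lt_reg_r C); auto. unfold Rdiv. rewrite Rmult_assoc, Rinv_l; lra. Qed.

Definition Kc b al M := al * Ep (b - 1) 1 * M.

Lemma Kc_pos b c al M phi fl : Setup b c al M phi fl -> 0 <= Kc b al M.
Proof. intros S. unfold Kc. pose proof (S_al0 _ _ _ _ _ _ S). pose proof (Ep_pos (b-1) 1).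
  pose proof (S_M0 _ _ _ _ _ _ S). apply Rmult_le_pos; [|lra]. apply Rmult_le_pos; lra. Qed.

Lemma Gf_R_le0 b c al M phi fl y : Setup b c al M phi fl -> al < b + 1 ->
  (b - 1) / (b + 1) < y < 1 -> Gf b phi fl y <= 0.
Proof.
  intros S Hal Hy. pose proof (x0_bounds b (S_b _ _ _ _ _ _ S)).
  pose proof (Kc_pos _ _ _ _ _ _ S) as HK. pose proof (S_M0 _ _ _ _ _ _ S) as HM.
  destruct (Rle_or_lt (Gf b phi fl y) 0) as [|Hg]; auto. exfalso.
  set (C := M * Kc b al M + 1).
  assert (HC : 0 < C) by (unfold C; pose proof (Rmult_le_pos _ _ HM HK); lra).
  set (t := Rmax y (1 - Gf b phi fl y / (2 * C))).
  assert (Ht : y <= t < 1).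
  { unfold t. split; [apply Rmax_l|]. apply Rmax_case; [lra|].
    assert (0 < Gf b phi fl y / (2 * C)) by (apply Rdiv_lt_0_compat; lra). lra. }
  assert (H1t : 1 - t <= Gf b phi fl y / (2 * C)).
  { unfold t. pose proof (Rmax_r y (1 - Gf b phi fl y / (2 * C))). lra. }
  assert (Hm : Gf b phi fl y <= Gf b phi fl t) by (apply (Gf_mono b c al M phi fl); auto; lra).
  assert (Hup : Gf b phi fl t <= M * (Kc b al M * (1 - t))).
  { unfold Gf.
    assert (0 <= (1 - t) * Ep b t * phi t ^ 2 / (t - (b - 1) / (b + 1))).
    { apply Rmult_le_pos. apply Rmult_le_pos. apply Rmult_le_pos. lra. left; apply Ep_pos.
      apply pow2_ge_0. left; apply Rinv_0_lt_compat; lra. }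
    assert (phi t * fl t <= M * (Kc b al M * (1 - t))).
    { eapply Rle_trans; [apply Rle_abs|]. rewrite Rabs_mult.
      apply Rmult_le_compat; try apply Rabs_pos.
      apply (S_M _ _ _ _ _ _ S); lra. apply (flux_right_M b c al M phi fl); auto; lra. }
    lra. }
  assert (M * (Kc b al M * (1 - t)) <= M * Kc b al M * (Gf b phi fl y / (2 * C))).
  { rewrite <- Rmult_assoc. apply Rmult_le_compat_l; auto. apply Rmult_le_pos; auto. }
  assert (M * Kc b al M * (Gf b phi fl y / (2 * C)) < Gf b phi fl y).
  { replace (M * Kc b al M * (Gf b phi fl y / (2 * C))) with
      ((M * Kc b al M) / (2 * C) * Gf b phi fl y) by (field; lra).
    rewrite <- (Rmult_1_l (Gf b phi fl y)) at 2. apply Rmult_lt_compat_r; auto.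
    pose proof (Rmult_le_pos _ _ HM HK). apply frac_lt1; unfold C; lra. }
  lra.
Qed.

Lemma Gf_L_ge0 b c al M phi fl y : Setup b c al M phi fl -> al < b + 1 ->
  -1 < y < (b - 1) / (b + 1) -> 0 <= Gf b phi fl y.
Proof.
  intros S Hal Hy. pose proof (x0_bounds b (S_b _ _ _ _ _ _ S)).
  pose proof (Kc_pos _ _ _ _ _ _ S) as HK. pose proof (S_M0 _ _ _ _ _ _ S) as HM.
  destruct (Rle_or_lt 0 (Gf b phi fl y)) as [|Hg]; auto. exfalso.
  set (C := M * Kc b al M + 1).
  assert (HC : 0 < C) by (unfold C; pose proof (Rmult_le_pos _ _ HM HK); lra).
  set (t := Rmin y (-1 - Gf b phi fl y / (2 * C))).
  assert (Ht : -1 < t <= y).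
  { unfold t. split; [|apply Rmin_l]. apply Rmin_case; [lra|].
    assert (Gf b phi fl y / (2 * C) < 0).
    { unfold Rdiv. apply Rmult_neg_pos; auto. apply Rinv_0_lt_compat; lra. } lra. }
  assert (H1t : 1 + t <= - Gf b phi fl y / (2 * C)).
  { unfold t. pose proof (Rmin_r y (-1 - Gf b phi fl y / (2 * C))).
    unfold Rdiv in *. lra. }
  assert (Hm : Gf b phi fl t <= Gf b phi fl y) by (apply (Gf_mono b c al M phi fl); auto; lra).
  assert (Hlo : - (M * (Kc b al M * (1 + t))) <= Gf b phi fl t).
  { unfold Gf.
    assert ((1 - t) * Ep b t * phi t ^ 2 / (t - (b - 1) / (b + 1)) <= 0).
    { unfold Rdiv.
      assert (HA : 0 <= (1 - t) * Ep b t * phi t ^ 2).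
      { apply Rmult_le_pos. apply Rmult_le_pos. lra. left; apply Ep_pos. apply pow2_ge_0. }
      assert (Hi : / (t - (b - 1) / (b + 1)) < 0) by (apply Rinv_lt_0_compat; lra).
      nra. }
    assert (- (M * (Kc b al M * (1 + t))) <= phi t * fl t).
    { assert (Rabs (phi t * fl t) <= M * (Kc b al M * (1 + t))).
      { rewrite Rabs_mult. apply Rmult_le_compat; try apply Rabs_pos.
        apply (S_M _ _ _ _ _ _ S); lra. apply (flux_left_M b c al M phi fl); auto; lra. }
      pose proof (Rle_abs (- (phi t * fl t))) as Hq. rewrite Rabs_Ropp in Hq. lra. }
    lra. }
  assert (M * (Kc b al M * (1 + t)) <= M * Kc b al M * (- Gf b phi fl y / (2 * C))).
  { rewrite <- Rmult_assoc. apply Rmult_le_compat_l; auto. apply Rmult_le_pos; auto. }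
  assert (M * Kc b al M * (- Gf b phi fl y / (2 * C)) < - Gf b phi fl y).
  { replace (M * Kc b al M * (- Gf b phi fl y / (2 * C))) with
      ((M * Kc b al M) / (2 * C) * (- Gf b phi fl y)) by (field; lra).
    rewrite <- (Rmult_1_l (- Gf b phi fl y)) at 2. apply Rmult_lt_compat_r; [lra|].
    pose proof (Rmult_le_pos _ _ HM HK). apply frac_lt1; unfold C; lra. }
  lra.
Qed.

Lemma Gf_near_x0 b c al M phi fl t : Setup b c al M phi fl ->
  phi ((b - 1) / (b + 1)) = 0 -> 0 <= t < 1 -> t <> (b - 1) / (b + 1) ->
  Rabs (Gf b phi fl t) <= (2 * Kc b al M ^ 2 + 2 * Ep b 1 * Kc b al M ^ 2) * Rabs (t - (b - 1) / (b + 1)).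
Proof.
  intros S Hz Ht Htx. pose proof (x0_bounds b (S_b _ _ _ _ _ _ S)) as Hx0.
  set (x0 := (b - 1) / (b + 1)) in *.
  pose proof (Kc_pos _ _ _ _ _ _ S) as HK.
  set (K := Kc b al M) in *.
  assert (Hp : Rabs (phi t) <= K * Rabs (t - x0)).
  { destruct (Rle_or_lt t x0).
    - assert (Ha : 0 <= t <= x0) by lra. assert (Hb1 : x0 < 1) by lra.
      pose proof (phi_lip_pos b c al M phi fl t x0 S Ha Hb1) as H1.
      rewrite Hz in H1. rewrite (Rabs_left1 (t - x0)) by lra.
      replace (0 - phi t) with (- phi t) in H1 by ring. rewrite Rabs_Ropp in H1.
      unfold K, Kc. lra.
    - assert (Ha : 0 <= x0 <= t) by lra. assert (Hb1 : t < 1) by lra.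
      pose proof (phi_lip_pos b c al M phi fl x0 t S Ha Hb1) as H1.
      rewrite Hz in H1. rewrite (Rabs_right (t - x0)) by lra.
      replace (phi t - 0) with (phi t) in H1 by ring. unfold K, Kc. lra. }
  assert (Hf : Rabs (fl t) <= 2 * K).
  { pose proof (flux_right_M b c al M phi fl t S ltac:(lra)). fold (Kc b al M) in H. fold K in H.
    assert (K * (1 - t) <= K * 2) by (apply Rmult_le_compat_l; lra). lra. }
  assert (Hpsi : 0 < Rabs (t - x0)) by (apply Rabs_pos_lt; lra).
  set (r := Rabs (t - x0)) in *.
  unfold Gf. fold x0.
  eapply Rle_trans; [apply Rabs_triang|]. rewrite Rabs_Ropp.
  assert (H1 : Rabs (phi t * fl t) <= 2 * K ^ 2 * r).
  { rewrite Rabs_mult. apply Rle_trans with (K * r * (2 * K)).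
    apply Rmult_le_compat; auto; apply Rabs_pos. nra. }
  assert (H2 : Rabs ((1 - t) * Ep b t * phi t ^ 2 / (t - x0)) <= 2 * Ep b 1 * K ^ 2 * r).
  { unfold Rdiv. rewrite !Rabs_mult, Rabs_Rinv by lra. fold r.
    rewrite (Rabs_right (1 - t)) by lra. rewrite (Rabs_right (Ep b t)) by (left; apply Ep_pos).
    rewrite <- RPow_abs.
    assert (HE : Ep b t <= Ep b 1) by (apply Ep_mono; pose proof (S_b _ _ _ _ _ _ S); lra).
    pose proof (Ep_pos b t).
    assert (Hp2 : Rabs (phi t) ^ 2 <= (K * r) ^ 2).
    { apply pow_incr. split; auto. apply Rabs_pos. }
    apply Rle_trans with (2 * Ep b 1 * (K * r) ^ 2 * / r).
    - apply Rmult_le_compat_r; [left; apply Rinv_0_lt_compat; auto|].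
      apply Rmult_le_compat; try lra. apply Rmult_le_pos; lra. apply pow2_ge_0.
      apply Rmult_le_compat; lra.
    - right. field. lra. }
  lra.
Qed.

Lemma Gf_at_zero b phi fl z : phi z = 0 -> Gf b phi fl z = 0.
Proof. intros Hz. unfold Gf. rewrite Hz. unfold Rdiv. ring. Qed.

Lemma zero_R b c al M phi fl z : Setup b c al M phi fl -> al < b + 1 ->
  (b - 1) / (b + 1) <= z < 1 -> phi z = 0 -> forall y, z < y < 1 -> phi y = 0.
Proof.
  intros S Hal Hz Hpz. pose proof (x0_bounds b (S_b _ _ _ _ _ _ S)) as Hx0.
  assert (Hge : forall y, z < y < 1 -> 0 <= Gf b phi fl y).
  { intros y Hy. destruct (Req_dec z ((b - 1) / (b + 1))) as [Heq|Hne].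
    - destruct (Rle_or_lt 0 (Gf b phi fl y)) as [|Hg]; auto. exfalso.
      set (C := 2 * Kc b al M ^ 2 + 2 * Ep b 1 * Kc b al M ^ 2 + 1).
      assert (HC : 0 < C).
      { unfold C. pose proof (pow2_ge_0 (Kc b al M)). pose proof (Ep_pos b 1).
        assert (0 <= Ep b 1 * Kc b al M ^ 2) by (apply Rmult_le_pos; lra). lra. }
      set (x0 := (b - 1) / (b + 1)) in *.
      set (t := x0 + Rmin ((y - x0) / 2) (- Gf b phi fl y / (2 * C))).
      assert (Hm1 : 0 < Rmin ((y - x0) / 2) (- Gf b phi fl y / (2 * C))).
      { apply Rmin_case. lra. apply Rdiv_lt_0_compat; lra. }
      assert (Hm2 := Rmin_l ((y - x0) / 2) (- Gf b phi fl y / (2 * C))).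
      assert (Hm3 := Rmin_r ((y - x0) / 2) (- Gf b phi fl y / (2 * C))).
      assert (Hmono : Gf b phi fl t <= Gf b phi fl y).
      { apply (Gf_mono b c al M phi fl); auto. unfold t; lra. left. change ((b - 1) / (b + 1)) with x0. unfold t; lra. }
      assert (Hq1 : phi x0 = 0) by (rewrite <- Heq; auto).
      assert (Hq2 : 0 <= t < 1) by (unfold t; lra).
      assert (Hq3 : t <> x0) by (unfold t; lra).
      assert (Hnear := Gf_near_x0 b c al M phi fl t S Hq1 Hq2 Hq3).
      change ((b - 1) / (b + 1)) with x0 in Hnear. rewrite (Rabs_right (t - x0)) in Hnear by (unfold t; lra).
      assert (Hc' : (2 * Kc b al M ^ 2 + 2 * Ep b 1 * Kc b al M ^ 2) * (t - x0) <= C * (t - x0)).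
      { apply Rmult_le_compat_r. unfold t; lra. unfold C; lra. }
      assert (C * (t - x0) <= C * (- Gf b phi fl y / (2 * C))).
      { apply Rmult_le_compat_l. lra. unfold t. lra. }
      assert (C * (- Gf b phi fl y / (2 * C)) = - Gf b phi fl y / 2) by (field; lra).
      pose proof (Rle_abs (- Gf b phi fl t)) as Hq4. rewrite Rabs_Ropp in Hq4. lra.
    - assert (Gf b phi fl z <= Gf b phi fl y) by (apply (Gf_mono b c al M phi fl); auto; lra).
      rewrite Gf_at_zero in H; auto. }
  assert (Hz0 : forall y, z < y < 1 -> Gf b phi fl y = 0).
  { intros y Hy. apply Rle_antisym. apply (Gf_R_le0 b c al M phi fl); auto; lra. now apply Hge. }
  intros y Hy.
  destruct (Gf_Derive b c al M phi fl y S Hal ltac:(lra) ltac:(lra)) as [_ [_ Hlow]].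
  rewrite (Derive_loc_zero (Gf b phi fl) z 1 y Hy Hz0) in Hlow.
  assert (Hco : 0 < (b + 1 - al + c ^ 2 * (1 + y) / 8) * Ep (b - 1) y).
  { apply Rmult_lt_0_compat; [|apply Ep_pos].
    assert (0 <= c ^ 2 * (1 + y)) by (apply Rmult_le_pos; [apply pow2_ge_0|lra]). lra. }
  assert (phi y ^ 2 <= 0).
  { apply (Rmult_le_reg_l _ _ _ Hco). lra. }
  pose proof (pow2_ge_0 (phi y)). nra.
Qed.

Lemma zero_L b c al M phi fl z : Setup b c al M phi fl -> al < b + 1 ->
  -1 < z <= (b - 1) / (b + 1) -> phi z = 0 -> forall y, -1 < y < z -> phi y = 0.
Proof.
  intros S Hal Hz Hpz. pose proof (x0_bounds b (S_b _ _ _ _ _ _ S)) as Hx0.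
  assert (Hle : forall y, -1 < y < z -> Gf b phi fl y <= 0).
  { intros y Hy. destruct (Req_dec z ((b - 1) / (b + 1))) as [Heq|Hne].
    - destruct (Rle_or_lt (Gf b phi fl y) 0) as [|Hg]; auto. exfalso.
      set (C := 2 * Kc b al M ^ 2 + 2 * Ep b 1 * Kc b al M ^ 2 + 1).
      assert (HC : 0 < C).
      { unfold C. pose proof (pow2_ge_0 (Kc b al M)). pose proof (Ep_pos b 1).
        assert (0 <= Ep b 1 * Kc b al M ^ 2) by (apply Rmult_le_pos; lra). lra. }
      set (x0 := (b - 1) / (b + 1)) in *.
      set (u := Rmax y 0).
      assert (Hu : y <= u /\ 0 <= u /\ u < x0).
      { unfold u. split; [apply Rmax_l|split; [apply Rmax_r|]]. apply Rmax_case; lra. }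
      set (t := x0 - Rmin ((x0 - u) / 2) (Gf b phi fl y / (2 * C))).
      assert (Hm1 : 0 < Rmin ((x0 - u) / 2) (Gf b phi fl y / (2 * C))).
      { apply Rmin_case. lra. apply Rdiv_lt_0_compat; lra. }
      assert (Hm2 := Rmin_l ((x0 - u) / 2) (Gf b phi fl y / (2 * C))).
      assert (Hm3 := Rmin_r ((x0 - u) / 2) (Gf b phi fl y / (2 * C))).
      assert (Hmono : Gf b phi fl y <= Gf b phi fl t).
      { apply (Gf_mono b c al M phi fl); auto. unfold t; lra. right.
        change ((b - 1) / (b + 1)) with x0. unfold t; lra. }
      assert (Hq1 : phi x0 = 0) by (rewrite <- Heq; auto).
      assert (Hq2 : 0 <= t < 1) by (unfold t; lra).
      assert (Hq3 : t <> x0) by (unfold t; lra).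
      assert (Hnear := Gf_near_x0 b c al M phi fl t S Hq1 Hq2 Hq3).
      change ((b - 1) / (b + 1)) with x0 in Hnear.
      rewrite (Rabs_left1 (t - x0)) in Hnear by (unfold t; lra).
      assert (Hc' : (2 * Kc b al M ^ 2 + 2 * Ep b 1 * Kc b al M ^ 2) * (- (t - x0)) <= C * (- (t - x0))).
      { apply Rmult_le_compat_r. unfold t; lra. unfold C; lra. }
      assert (C * (- (t - x0)) <= C * (Gf b phi fl y / (2 * C))).
      { apply Rmult_le_compat_l. lra. unfold t. lra. }
      assert (C * (Gf b phi fl y / (2 * C)) = Gf b phi fl y / 2) by (field; lra).
      pose proof (Rle_abs (Gf b phi fl t)). lra.
    - assert (Hq : Gf b phi fl y <= Gf b phi fl z) by (apply (Gf_mono b c al M phi fl); auto; try lra; right; lra).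
      rewrite (Gf_at_zero b phi fl z Hpz) in Hq; auto. }
  assert (Hz0 : forall y, -1 < y < z -> Gf b phi fl y = 0).
  { intros y Hy. apply Rle_antisym. now apply Hle. apply (Gf_L_ge0 b c al M phi fl); auto; lra. }
  intros y Hy.
  destruct (Gf_Derive b c al M phi fl y S Hal ltac:(lra) ltac:(lra)) as [_ [_ Hlow]].
  rewrite (Derive_loc_zero (Gf b phi fl) (-1) z y Hy Hz0) in Hlow.
  assert (Hco : 0 < (b + 1 - al + c ^ 2 * (1 + y) / 8) * Ep (b - 1) y).
  { apply Rmult_lt_0_compat; [|apply Ep_pos].
    assert (0 <= c ^ 2 * (1 + y)) by (apply Rmult_le_pos; [apply pow2_ge_0|lra]). lra. }
  assert (phi y ^ 2 <= 0).
  { apply (Rmult_le_reg_l _ _ _ Hco). lra. }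
  pose proof (pow2_ge_0 (phi y)). nra.
Qed.

Lemma ball_R x e y : ball x e y <-> Rabs (y - x) < e.
Proof.
  unfold ball; simpl; unfold AbsRing_ball, abs, minus, plus, opp; simpl. tauto.
Qed.

Lemma near_within (f : R -> R) (D : R -> Prop) x eps :
  filterlim f (within D (locally x)) (locally (f x)) -> 0 < eps ->
  exists delta, 0 < delta /\ forall y, Rabs (y - x) < delta -> D y -> Rabs (f y - f x) < eps.
Proof.
  intros Hf He. apply filterlim_locally with (eps := mkposreal _ He) in Hf.
  destruct Hf as [d Hd]. exists d. split; [apply cond_pos|].
  intros y Hy HD. specialize (Hd y). apply ball_R in Hy. specialize (Hd Hy HD).
  apply ball_R in Hd. exact Hd.
Qed.

Lemma near_cont (f : R -> R) x eps : continuous f x -> 0 < eps ->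
  exists delta, 0 < delta /\ forall y, Rabs (y - x) < delta -> Rabs (f y - f x) < eps.
Proof.
  intros Hf He. apply filterlim_locally with (eps := mkposreal _ He) in Hf.
  destruct Hf as [d Hd]. exists d. split; [apply cond_pos|].
  intros y Hy. specialize (Hd y). apply ball_R in Hy. specialize (Hd Hy).
  apply ball_R in Hd. exact Hd.
Qed.

Lemma cont_zero_right (f : R -> R) x d : continuous f x -> 0 < d ->
  (forall s, x < s < x + d -> f s = 0) -> f x = 0.
Proof.
  intros Hc Hd Hz. destruct (Req_dec (f x) 0) as [|Hne]; auto. exfalso.
  destruct (near_cont f x (Rabs (f x)) Hc) as [e [He Hn]]. now apply Rabs_pos_lt.
  set (s := x + Rmin d e / 2).
  assert (Hm : 0 < Rmin d e) by (apply Rmin_case; lra).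
  pose proof (Rmin_l d e). pose proof (Rmin_r d e).
  specialize (Hn s). rewrite (Hz s) in Hn by (unfold s; lra).
  replace (0 - f x) with (- f x) in Hn by ring. rewrite Rabs_Ropp in Hn.
  apply Rlt_irrefl with (Rabs (f x)). apply Hn. unfold s.
  rewrite Rabs_right; lra.
Qed.

Lemma cont_zero_left (f : R -> R) x d : continuous f x -> 0 < d ->
  (forall s, x - d < s < x -> f s = 0) -> f x = 0.
Proof.
  intros Hc Hd Hz. destruct (Req_dec (f x) 0) as [|Hne]; auto. exfalso.
  destruct (near_cont f x (Rabs (f x)) Hc) as [e [He Hn]]. now apply Rabs_pos_lt.
  set (s := x - Rmin d e / 2).
  assert (Hm : 0 < Rmin d e) by (apply Rmin_case; lra).
  pose proof (Rmin_l d e). pose proof (Rmin_r d e).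
  specialize (Hn s). rewrite (Hz s) in Hn by (unfold s; lra).
  replace (0 - f x) with (- f x) in Hn by ring. rewrite Rabs_Ropp in Hn.
  apply Rlt_irrefl with (Rabs (f x)). apply Hn. unfold s.
  rewrite Rabs_left; lra.
Qed.

Lemma lip_on (f : R -> R) l r B :
  (forall u, l <= u <= r -> ex_derive f u) ->
  (forall u, l <= u <= r -> Rabs (Derive f u) <= B) ->
  forall s t, l <= s <= r -> l <= t <= r -> Rabs (f s - f t) <= B * Rabs (s - t).
Proof.
  intros Hd HB s t Hs Ht. destruct (Rle_or_lt t s).
  - rewrite (Rabs_right (s - t)) by lra. apply mvt_bound_D; auto.
    intros; apply Hd; lra. intros; apply HB; lra.
  - rewrite Rabs_minus_sym, (Rabs_left (s - t)) by lra.
    replace (- (s - t)) with (t - s) by ring. apply mvt_bound_D; try lra.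
    intros; apply Hd; lra. intros; apply HB; lra.
Qed.

Lemma local_unique b c al M phi fl z : Setup b c al M phi fl -> -1 < z < 1 ->
  phi z = 0 -> fl z = 0 ->
  exists h, 0 < h /\ forall s, Rabs (s - z) < h -> phi s = 0.
Proof.
  intros S Hz Hpz Hfz. pose proof (S_b _ _ _ _ _ _ S) as Hb.
  set (h0 := (1 - Rabs z) / 2).
  assert (Hh0 : 0 < h0 /\ -1 < z - h0 /\ z + h0 < 1).
  { unfold h0. destruct (Rle_or_lt 0 z); [rewrite Rabs_right by lra | rewrite Rabs_left by lra]; lra. }
  set (pmin := (1 - z - h0) * Ep b (z - h0)).
  assert (Hpmin : 0 < pmin) by (unfold pmin; apply Rmult_lt_0_compat; [lra|apply Ep_pos]).
  set (Cw := al * Ep (b - 1) 1).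
  assert (HCw : 0 <= Cw) by (unfold Cw; pose proof (S_al0 _ _ _ _ _ _ S); pose proof (Ep_pos (b-1) 1); nra).
  set (h := Rmin h0 (Rmin 1 (pmin / (2 * (Cw + 1))))).
  assert (Hh : 0 < h /\ h <= h0 /\ h <= 1 /\ h <= pmin / (2 * (Cw + 1))).
  { unfold h. pose proof (Rmin_l h0 (Rmin 1 (pmin / (2 * (Cw + 1))))).
    pose proof (Rmin_r h0 (Rmin 1 (pmin / (2 * (Cw + 1))))).
    pose proof (Rmin_l 1 (pmin / (2 * (Cw + 1)))). pose proof (Rmin_r 1 (pmin / (2 * (Cw + 1)))).
    assert (0 < pmin / (2 * (Cw + 1))) by (apply Rdiv_lt_0_compat; lra).
    repeat split; try lra. repeat apply Rmin_case; lra. }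
  set (D := fun s => z - h <= s <= z + h).
  destruct (sup_exists D phi M) as [m [Hm0 [Hm Hmin]]].
  { intros x Hx. apply (S_M _ _ _ _ _ _ S). unfold D in Hx. lra. }
  assert (HD : forall u, D u -> -1 < u < 1) by (intros u Hu; unfold D in Hu; lra).
  assert (Hfl : forall u, D u -> Rabs (fl u) <= Cw * m * h).
  { intros u Hu. replace (fl u) with (fl u - fl z) by (rewrite Hfz; ring).
    apply Rle_trans with (Cw * m * Rabs (u - z)).
    - apply (lip_on fl (z - h) (z + h) (Cw * m)).
      + intros v Hv. apply (S_dfl _ _ _ _ _ _ S). apply HD. exact Hv.
      + intros v Hv. eapply Rle_trans; [apply (dfl_bound b c al M phi fl v S (HD v Hv))|].
        fold Cw. apply Rmult_le_compat_l; [exact HCw | apply Hm; exact Hv].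
      + exact Hu.
      + unfold D; lra.
    - apply Rmult_le_compat_l; [apply Rmult_le_pos; auto|]. unfold D in Hu.
      apply Rabs_le; lra. }
  assert (Hdp : forall u, D u -> Rabs (Derive phi u) <= Cw * m * h / pmin).
  { intros u Hu. rewrite (dphi_eq b c al M phi fl u S (HD u Hu)).
    pose proof (Ep_pos b u). unfold D in Hu.
    assert (Hp : pmin <= (1 - u) * Ep b u).
    { unfold pmin. apply Rmult_le_compat; try lra. left; apply Ep_pos. apply Ep_mono; lra. }
    unfold Rdiv. rewrite Rabs_mult, Rabs_Rinv by (apply Rgt_not_eq; lra).
    rewrite (Rabs_right ((1 - u) * Ep b u)) by lra.
    apply Rmult_le_compat; try apply Rabs_pos. left; apply Rinv_0_lt_compat; lra.
    apply Hfl. unfold D; lra. apply Rinv_le_contravar; lra. }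
  assert (Hhalf : forall s, D s -> Rabs (phi s) <= m / 2).
  { intros s Hs. replace (phi s) with (phi s - phi z) by (rewrite Hpz; ring).
    apply Rle_trans with (Cw * m * h / pmin * Rabs (s - z)).
    - apply (lip_on phi (z - h) (z + h) (Cw * m * h / pmin)).
      + intros v Hv. apply (S_dphi _ _ _ _ _ _ S). apply HD. exact Hv.
      + exact Hdp.
      + exact Hs.
      + unfold D; lra.
    - apply Rle_trans with (Cw * m * h / pmin * h).
      + apply Rmult_le_compat_l. unfold Rdiv. apply Rmult_le_pos. apply Rmult_le_pos; [apply Rmult_le_pos|]; lra.
        left; apply Rinv_0_lt_compat; lra. unfold D in Hs. apply Rabs_le; lra.
      + replace (Cw * m * h / pmin * h) with (m * (Cw * h * h / pmin)) by (field; lra).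
        replace (m / 2) with (m * (1 / 2)) by field. apply Rmult_le_compat_l; auto.
        apply (Rmult_le_reg_r pmin); auto. unfold Rdiv. rewrite Rmult_assoc, Rinv_l, Rmult_1_r by lra.
        assert (Cw * h * h <= Cw * h * 1) by (apply Rmult_le_compat_l; [apply Rmult_le_pos|]; lra).
        assert (Cw * h <= Cw * (pmin / (2 * (Cw + 1)))) by (apply Rmult_le_compat_l; lra).
        assert (Cw * (pmin / (2 * (Cw + 1))) <= pmin * / 2).
        { replace (Cw * (pmin / (2 * (Cw + 1)))) with (pmin * / 2 * (Cw / (Cw + 1))) by (field; lra).
          rewrite <- (Rmult_1_r (pmin * / 2)) at 2. apply Rmult_le_compat_l. lra.
          left. apply frac_lt1; lra. }
        lra. }
  assert (Hm2 : m <= m / 2) by (apply Hmin; [lra|exact Hhalf]).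
  exists h. split; [lra|]. intros s Hs.
  assert (HDs : D s) by (unfold D; apply Rabs_lt_between in Hs; lra).
  pose proof (Hm s HDs). pose proof (Rabs_pos (phi s)).
  assert (Rabs (phi s) = 0) by lra. now apply Rabs_eq_0.
Qed.

Lemma phi_cont b c al M phi fl x : Setup b c al M phi fl -> -1 < x < 1 -> continuous phi x.
Proof. intros S Hx. exact (ex_derive_continuous phi x (S_dphi _ _ _ _ _ _ S x Hx)). Qed.

Lemma fl_cont b c al M phi fl x : Setup b c al M phi fl -> -1 < x < 1 -> continuous fl x.
Proof. intros S Hx. exact (ex_derive_continuous fl x (S_dfl _ _ _ _ _ _ S x Hx)). Qed.

Lemma fl_zero_of_phi b c al M phi fl l r : Setup b c al M phi fl -> -1 <= l < r -> r <= 1 ->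
  (forall s, l < s < r -> phi s = 0) -> forall s, l < s < r -> fl s = 0.
Proof.
  intros S Hlr Hr Hz s Hs. rewrite (S_fl _ _ _ _ _ _ S s ltac:(lra)).
  rewrite (Derive_loc_zero phi l r s Hs Hz). ring.
Qed.

Lemma extend_left b c al M phi fl w u : Setup b c al M phi fl -> -1 < w < 1 ->
  -1 <= u < w -> (forall s, u < s <= w -> phi s = 0) ->
  forall s, -1 < s <= w -> phi s = 0.
Proof.
  intros S Hw Hu Hzu.
  set (E := fun y => -1 <= - y <= w /\ forall s, - y < s <= w -> phi s = 0).
  assert (HbE : bound E) by (exists 1; intros y [Hy _]; lra).
  assert (HE : E (- u)). { split. lra. intros s Hs. apply Hzu. lra. }
  destruct (completeness E HbE (ex_intro _ _ HE)) as [l [Hub Hlub]].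
  assert (Hl1 : - u <= l) by (apply Hub; auto).
  assert (Hl2 : l <= 1) by (apply Hlub; intros y [Hy _]; lra).
  set (t1 := - l).
  assert (H3 : forall s, t1 < s <= w -> phi s = 0).
  { intros s Hs. destruct (Req_dec (phi s) 0) as [|Hne]; auto. exfalso.
    assert (l <= - s).
    { apply Hlub. intros y Hy. destruct (Rle_or_lt y (- s)); auto.
      exfalso. apply Hne. destruct Hy as [_ Hy]. apply Hy. lra. }
    unfold t1 in Hs. lra. }
  destruct (Rle_or_lt t1 (-1)) as [Ht1|Ht1].
  - intros s Hs. apply H3. lra.
  - exfalso.
    assert (Htw : t1 < w) by (unfold t1; lra).
    assert (Hp0 : phi t1 = 0).
    { apply (cont_zero_right phi t1 (w - t1)). apply (phi_cont b c al M phi fl _ S); unfold t1 in *; lra.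
      lra. intros s Hs. apply H3. lra. }
    assert (Hf0 : fl t1 = 0).
    { apply (cont_zero_right fl t1 (w - t1)). apply (fl_cont b c al M phi fl _ S); unfold t1 in *; lra.
      lra. intros s Hs. apply (fl_zero_of_phi b c al M phi fl t1 w S); try lra.
      intros s' Hs'. apply H3. lra. }
    destruct (local_unique b c al M phi fl t1 S ltac:(unfold t1 in *; lra) Hp0 Hf0) as [h [Hh Hloc]].
    set (t2 := Rmax (-1) (t1 - h / 2)).
    assert (HEt2 : E (- t2)).
    { split. rewrite Ropp_involutive. unfold t2. split; [apply Rmax_l|]. apply Rmax_case; lra.
      rewrite Ropp_involutive. intros s Hs. destruct (Rle_or_lt s t1).
      - apply Hloc. pose proof (Rmax_r (-1) (t1 - h / 2)). fold t2 in H0.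
        apply Rabs_lt_between. lra.
      - apply H3; lra. }
    assert (- t2 <= l) by (apply Hub; auto).
    unfold t2 in H. pose proof (Rmax_l (-1) (t1 - h / 2)).
    revert H H0. apply Rmax_case; unfold t1 in *; intros; lra.
Qed.

Lemma extend_right b c al M phi fl w v : Setup b c al M phi fl -> -1 < w < 1 ->
  w < v <= 1 -> (forall s, w <= s < v -> phi s = 0) ->
  forall s, w <= s < 1 -> phi s = 0.
Proof.
  intros S Hw Hv Hzv.
  set (E := fun y => w <= y <= 1 /\ forall s, w <= s < y -> phi s = 0).
  assert (HbE : bound E) by (exists 1; intros y [Hy _]; lra).
  assert (HE : E v). { split. lra. intros s Hs. apply Hzv. lra. }
  destruct (completeness E HbE (ex_intro _ _ HE)) as [l [Hub Hlub]].
  assert (Hl1 : v <= l) by (apply Hub; auto).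
  assert (Hl2 : l <= 1) by (apply Hlub; intros y [Hy _]; lra).
  assert (H3 : forall s, w <= s < l -> phi s = 0).
  { intros s Hs. destruct (Req_dec (phi s) 0) as [|Hne]; auto. exfalso.
    assert (l <= s).
    { apply Hlub. intros y Hy. destruct (Rle_or_lt y s); auto.
      exfalso. apply Hne. destruct Hy as [_ Hy]. apply Hy. lra. }
    lra. }
  destruct (Rle_or_lt 1 l) as [Ht1|Ht1].
  - intros s Hs. apply H3. lra.
  - exfalso.
    assert (Hp0 : phi l = 0).
    { apply (cont_zero_left phi l (l - w)). apply (phi_cont b c al M phi fl _ S); lra.
      lra. intros s Hs. apply H3. lra. }
    assert (Hf0 : fl l = 0).
    { apply (cont_zero_left fl l (l - w)). apply (fl_cont b c al M phi fl _ S); lra.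
      lra. intros s Hs. apply (fl_zero_of_phi b c al M phi fl w l S); try lra.
      intros s' Hs'. apply H3. lra. }
    destruct (local_unique b c al M phi fl l S ltac:(lra) Hp0 Hf0) as [h [Hh Hloc]].
    set (t2 := Rmin 1 (l + h / 2)).
    assert (HEt2 : E t2).
    { split. unfold t2. split; [|apply Rmin_l]. apply Rmin_case; lra.
      intros s Hs. destruct (Rle_or_lt l s).
      - apply Hloc. pose proof (Rmin_r 1 (l + h / 2)). fold t2 in H0.
        apply Rabs_lt_between. lra.
      - apply H3; lra. }
    assert (t2 <= l) by (apply Hub; auto).
    unfold t2 in H. revert H. apply Rmin_case; intros; lra.
Qed.

Lemma all_zero b c al M phi fl u v : Setup b c al M phi fl -> -1 <= u < v -> v <= 1 ->
  (forall s, u < s < v -> phi s = 0) -> forall s, -1 < s < 1 -> phi s = 0.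
Proof.
  intros S Huv Hv Hz s Hs.
  set (w := (u + v) / 2).
  destruct (Rle_or_lt s w).
  - apply (extend_left b c al M phi fl w u S).
    + unfold w; lra.
    + unfold w; lra.
    + intros s' Hs'. apply Hz. unfold w in Hs'; lra.
    + lra.
  - apply (extend_right b c al M phi fl w v S).
    + unfold w; lra.
    + unfold w; lra.
    + intros s' Hs'. apply Hz. unfold w in Hs'; lra.
    + lra.
Qed.

Lemma zero_between b c al M phi fl p q : Setup b c al M phi fl -> -1 < p < q -> q < 1 ->
  phi p * phi q < 0 -> exists z, p <= z <= q /\ phi z = 0.
Proof.
  intros S Hp Hq Hpq.
  destruct (Ranalysis5.IVT_interv (fun t => - phi p * phi t) p q) as [z [Hz Hz0]].
  - intros a Ha. apply (cont_of_is_derive _ a (Derive (fun t => - phi p * phi t) a)).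
    apply Derive_correct. apply ex_derive_scal. apply (S_dphi _ _ _ _ _ _ S). lra.
  - lra.
  - pose proof (pow2_ge_0 (phi p)). assert (phi p <> 0) by (intro H0; rewrite H0 in Hpq; lra).
    assert (0 < phi p ^ 2) by (apply pow2_gt_0; auto). simpl in *. lra.
  - lra.
  - exists z. split; auto. assert (phi p <> 0) by (intro H0; rewrite H0 in Hpq; lra).
    apply (Rmult_eq_reg_l (- phi p)). lra. lra.
Qed.

Lemma no_zero_contra b c al M phi fl : Setup b c al M phi fl ->
  (forall x, -1 < x < 1 -> phi x <> 0) -> False.
Proof.
  intros S Hnz.
  set (sg := if Rle_dec 0 (phi 0) then 1 else -1).
  assert (Hp0 := Hnz 0 ltac:(lra)).
  assert (Hsg0 : 0 < sg * phi 0).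
  { unfold sg; destruct (Rle_dec 0 (phi 0)); [|]; lra. }
  assert (Hsg1 : sg * sg = 1) by (unfold sg; destruct (Rle_dec 0 (phi 0)); lra).
  assert (Hpos : forall x, -1 < x < 1 -> 0 < sg * phi x).
  { intros x Hx. destruct (Rlt_or_le 0 (sg * phi x)) as [|Hle]; auto. exfalso.
    assert (Hxn : phi x <> 0) by (apply Hnz; auto).
    assert (Hneg : phi x * phi 0 < 0).
    { assert (sg * phi x < 0).
      { destruct Hle as [|Heq]; auto. exfalso. apply Hxn.
        apply (Rmult_eq_reg_l sg). lra. intro; rewrite H in Hsg1; lra. }
      assert ((sg * phi x) * (sg * phi 0) < 0) by (apply Rmult_neg_pos; auto).
      replace (sg * phi x * (sg * phi 0)) with ((sg * sg) * (phi x * phi 0)) in H0 by ring.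
      rewrite Hsg1 in H0. lra. }
    destruct (Rlt_or_le x 0) as [Hx0|Hx0].
    - destruct (zero_between b c al M phi fl x 0 S ltac:(lra) ltac:(lra) Hneg) as [z [Hz Hz0]].
      apply (Hnz z); auto. lra.
    - destruct (Req_dec x 0) as [->|]; [lra|].
      destruct (zero_between b c al M phi fl 0 x S ltac:(lra) ltac:(lra) ltac:(rewrite Rmult_comm; exact Hneg)) as [z [Hz Hz0]].
      apply (Hnz z); auto. lra. }
  set (K := al * Ep (b - 1) 1 * M).
  assert (HK : 0 <= K) by (apply (Kc_pos _ _ _ _ _ _ S)).
  set (g := fun x => sg * fl x).
  assert (Hgd : forall x, -1 < x < 1 -> ex_derive g x /\ Derive g x = - (wf b c al x * (sg * phi x))).
  { intros x Hx. unfold g. split. apply ex_derive_scal. apply (S_dfl _ _ _ _ _ _ S); auto.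
    rewrite Derive_scal. rewrite (S_ode _ _ _ _ _ _ S x Hx). ring. }
  assert (Hdec : forall x y, -1 < x <= y -> y < 1 -> g y <= g x).
  { intros x y Hxy Hy.
    assert (-1 * g x <= -1 * g y).
    { apply (mono_D (fun t => -1 * g t) x y); try lra.
      - intros t Ht. apply ex_derive_scal. apply Hgd. lra.
      - intros t Ht. rewrite Derive_scal. rewrite (proj2 (Hgd t ltac:(lra))).
        destruct (wf_bounds b c al t (S_al _ _ _ _ _ _ S) ltac:(lra)).
        pose proof (Hpos t ltac:(lra)). nra. }
    lra. }
  assert (Hgabs : forall t, -1 < t < 1 -> Rabs (g t) = Rabs (fl t)).
  { intros t Ht. unfold g. rewrite Rabs_mult. replace (Rabs sg) with 1. ring.
    unfold sg; destruct (Rle_dec 0 (phi 0)). rewrite Rabs_R1; auto. rewrite Rabs_left; lra. }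
  assert (Hg0 : forall y, -1 < y < 1 -> g y = 0).
  { intros y Hy. apply Rle_antisym.
    - destruct (Rle_or_lt (g y) 0) as [|Hgy]; auto. exfalso.
      set (t := -1 + Rmin ((y + 1) / 2) (g y / (2 * (K + 1)))).
      assert (Hm1 : 0 < Rmin ((y + 1) / 2) (g y / (2 * (K + 1)))).
      { apply Rmin_case. lra. apply Rdiv_lt_0_compat; lra. }
      pose proof (Rmin_l ((y + 1) / 2) (g y / (2 * (K + 1)))).
      pose proof (Rmin_r ((y + 1) / 2) (g y / (2 * (K + 1)))).
      assert (g y <= g t) by (apply Hdec; unfold t; lra).
      assert (Hb := flux_left_M b c al M phi fl t S ltac:(unfold t; lra)). fold K in Hb.
      rewrite <- Hgabs in Hb by (unfold t; lra).
      assert (K * (1 + t) <= K * (g y / (2 * (K + 1)))) by (apply Rmult_le_compat_l; auto; unfold t; lra).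
      assert (K * (g y / (2 * (K + 1))) < g y).
      { replace (K * (g y / (2 * (K + 1)))) with (K / (2 * (K + 1)) * g y) by (field; lra).
        rewrite <- (Rmult_1_l (g y)) at 2. apply Rmult_lt_compat_r; auto. apply frac_lt1; lra. }
      pose proof (Rle_abs (g t)). lra.
    - destruct (Rle_or_lt 0 (g y)) as [|Hgy]; auto. exfalso.
      set (t := 1 - Rmin ((1 - y) / 2) (- g y / (2 * (K + 1)))).
      assert (Hm1 : 0 < Rmin ((1 - y) / 2) (- g y / (2 * (K + 1)))).
      { apply Rmin_case. lra. apply Rdiv_lt_0_compat; lra. }
      pose proof (Rmin_l ((1 - y) / 2) (- g y / (2 * (K + 1)))).
      pose proof (Rmin_r ((1 - y) / 2) (- g y / (2 * (K + 1)))).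
      assert (g t <= g y) by (apply Hdec; unfold t; lra).
      assert (Hb := flux_right_M b c al M phi fl t S ltac:(unfold t; lra)). fold K in Hb.
      rewrite <- Hgabs in Hb by (unfold t; lra).
      assert (K * (1 - t) <= K * (- g y / (2 * (K + 1)))) by (apply Rmult_le_compat_l; auto; unfold t; lra).
      assert (K * (- g y / (2 * (K + 1))) < - g y).
      { replace (K * (- g y / (2 * (K + 1)))) with (K / (2 * (K + 1)) * (- g y)) by (field; lra).
        rewrite <- (Rmult_1_l (- g y)) at 2. apply Rmult_lt_compat_r; [lra|]. apply frac_lt1; lra. }
      pose proof (Rle_abs (- g t)) as Hq. rewrite Rabs_Ropp in Hq. lra. }
  assert (HD := Derive_loc_zero g (-1) 1 0 ltac:(lra) Hg0).
  rewrite (proj2 (Hgd 0 ltac:(lra))) in HD.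
  destruct (wf_bounds b c al 0 (S_al _ _ _ _ _ _ S) ltac:(lra)).
  pose proof (Hpos 0 ltac:(lra)). nra.
Qed.

Lemma rpow_pos x y : 0 < x -> 0 < rpow x y.
Proof. intros H. unfold rpow. destruct (Rle_dec x 0); [lra|]. apply exp_pos. Qed.

Lemma norm_contra b phi : (forall s, -1 < s < 1 -> phi s = 0) ->
  is_RInt (fun t => rpow (1 + t) (b - 1) * Rabs (phi t) ^ 2) (-1) 1 (rpow 2 (b - 1)) -> False.
Proof.
  intros Hz Hi.
  assert (Hi0 : is_RInt (fun _ => 0) (-1) 1 (rpow 2 (b - 1))).
  { apply (is_RInt_ext (fun t => rpow (1 + t) (b - 1) * Rabs (phi t) ^ 2)); auto.
    intros x Hx. rewrite Rmin_left, Rmax_right in Hx by lra. rewrite Hz by lra.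
    rewrite Rabs_R0. change (rpow (1 + x) (b - 1) * 0 ^ 2 = 0). ring. }
  assert (Hc : is_RInt (fun _ : R => 0) (-1) 1 0).
  { pose proof (is_RInt_const (V:=R_NormedModule) (-1) 1 0) as Hc.
    match type of Hc with is_RInt _ _ _ ?v => replace v with 0 in Hc end. exact Hc.
    unfold scal; simpl; unfold mult; simpl. ring. }
  pose proof (is_RInt_unique (V:=R_CompleteNormedModule) _ _ _ _ Hi0) as E1.
  pose proof (is_RInt_unique (V:=R_CompleteNormedModule) _ _ _ _ Hc) as E2.
  rewrite E1 in E2.
  pose proof (rpow_pos 2 (b - 1) ltac:(lra)). rewrite E2 in H. lra.
Qed.

Lemma alpha_ge b c al M phi fl : Setup b c al M phi fl ->
  is_RInt (fun t => rpow (1 + t) (b - 1) * Rabs (phi t) ^ 2) (-1) 1 (rpow 2 (b - 1)) ->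
  b + 1 <= al.
Proof.
  intros S Hi. destruct (Rle_or_lt (b + 1) al) as [|Hal]; auto. exfalso.
  pose proof (x0_bounds b (S_b _ _ _ _ _ _ S)) as Hx0.
  destruct (classic (exists z, -1 < z < 1 /\ phi z = 0)) as [[z [Hz Hz0]]|Hnz].
  - destruct (Rle_or_lt ((b - 1) / (b + 1)) z) as [Hzx|Hzx].
    + apply (norm_contra b phi); auto.
      apply (all_zero b c al M phi fl z 1 S); try lra.
      intros s Hs. apply (zero_R b c al M phi fl z S Hal); auto; lra.
    + apply (norm_contra b phi); auto.
      apply (all_zero b c al M phi fl (-1) z S); try lra.
      intros s Hs. apply (zero_L b c al M phi fl z S Hal); auto; lra.
  - apply (no_zero_contra b c al M phi fl S). intros x Hx Hx0'. apply Hnz. exists x; auto.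
Qed.

Lemma ln_le_sub1 w : 0 < w -> ln w <= w - 1.
Proof.
  intros Hw. pose proof (exp_ineq1_le (ln w)). rewrite exp_ln in H by auto.
  pose proof (exp_ineq1_le (w - 1)).
  destruct (Rle_or_lt (ln w) (w - 1)); auto.
  apply exp_increasing in H1. rewrite exp_ln in H1 by auto. lra.
Qed.

Lemma ln_ge y : 0 < y -> 1 - / y <= ln y.
Proof.
  intros Hy. pose proof (ln_le_sub1 (/ y) ltac:(apply Rinv_0_lt_compat; auto)).
  rewrite ln_Rinv in H by auto. lra.
Qed.

Lemma exp34 : 2 / 5 <= exp (- (3 / 4)).
Proof.
  assert (H3 : exp (3 / 4) ^ 4 <= 27).
  { replace (exp (3 / 4) ^ 4) with (exp 3).
    - replace 3 with (1 + 1 + 1) by ring. rewrite !exp_plus.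
      pose proof exp_le_3. pose proof (exp_pos 1).
      assert (exp 1 * exp 1 <= 3 * 3) by (apply Rmult_le_compat; lra).
      assert (exp 1 * exp 1 * exp 1 <= 3 * 3 * 3) by (apply Rmult_le_compat; nra). lra.
    - replace 3 with (3/4 + 3/4 + 3/4 + 3/4) at 1 by field. rewrite !exp_plus. ring. }
  assert (Hl : exp (3 / 4) < 5 / 2).
  { destruct (Rlt_or_le (exp (3 / 4)) (5 / 2)); auto.
    assert ((5/2) ^ 4 <= exp (3 / 4) ^ 4) by (apply pow_incr; lra). simpl in *. lra. }
  rewrite exp_Ropp. pose proof (exp_pos (3/4)).
  apply (Rmult_le_reg_r (exp (3 / 4))); auto. rewrite Rinv_l by lra. nra.
Qed.

Lemma E_ge2 b : 1 <= b -> 2 <= Ep b 1.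
Proof.
  intros Hb. unfold Ep. replace (1 + 1) with 2 by ring.
  rewrite <- (exp_ln 2) at 1 by lra. apply exp_le_mono.
  assert (0 < ln 2) by (rewrite <- ln_1; apply ln_increasing; lra). nra.
Qed.

Lemma E_split b : Ep b 1 = 2 * Ep (b - 1) 1.
Proof. rewrite (Ep_split b 1) by lra. ring. Qed.

Lemma Pa_ge b : 3 / 2 <= b -> 2 / 5 * Ep b 1 <= Ep b ((b - 1) / b).
Proof.
  intros Hb. unfold Ep.
  replace (1 + (b - 1) / b) with (2 * (1 - / (2 * b))) by (field; lra).
  replace (1 + 1) with 2 by ring.
  assert (Hy : 0 < 1 - / (2 * b)).
  { assert (/ (2 * b) < 1). { replace (/ (2 * b)) with (1 / (2 * b)) by (field; lra). apply frac_lt1; lra. } lra. }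
  rewrite ln_mult by lra.
  pose proof (ln_ge _ Hy) as Hl.
  assert (Hq : 1 - / (1 - / (2 * b)) = - / (2 * b - 1)) by (field; lra).
  rewrite Hq in Hl.
  assert (b * (- / (2 * b - 1)) >= - (3 / 4)).
  { replace (b * - / (2 * b - 1)) with (- (b / (2 * b - 1))) by (field; lra).
    assert (b / (2 * b - 1) <= 3 / 4).
    { apply (Rmult_le_reg_r (2 * b - 1)); [lra|]. unfold Rdiv. rewrite Rmult_assoc, Rinv_l by lra. lra. }
    lra. }
  assert (b * ln (1 - / (2 * b)) >= - (3 / 4)).
  { assert (b * (- / (2 * b - 1)) <= b * ln (1 - / (2 * b))) by (apply Rmult_le_compat_l; lra). lra. }
  rewrite Rmult_plus_distr_l, exp_plus.
  pose proof (exp_pos (b * ln 2)).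
  assert (exp (- (3 / 4)) <= exp (b * ln (1 - / (2 * b)))) by (apply exp_le_mono; lra).
  pose proof exp34. nra.
Qed.

Lemma Qa_ge b : 3 / 2 <= b -> 1 / 5 * Ep b 1 <= Ep (b - 1) ((b - 1) / b).
Proof.
  intros Hb. pose proof (Pa_ge b Hb).
  assert (Ha : -1 < (b - 1) / b) by (assert (0 <= (b - 1) / b) by (apply Rmult_le_pos; [lra|left; apply Rinv_0_lt_compat; lra]); lra).
  rewrite (Ep_split b ((b - 1) / b) Ha) in H.
  assert (1 + (b - 1) / b <= 2).
  { assert ((b - 1) / b <= 1) by (left; apply frac_lt1; lra). lra. }
  pose proof (Ep_pos (b - 1) ((b - 1) / b)). nra.
Qed.

Lemma sub_int (f : R -> R) I p q : is_RInt f (-1) 1 I -> (forall t, 0 <= f t) ->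
  -1 <= p <= q -> q <= 1 -> ex_RInt f p q /\ RInt f p q <= I.
Proof.
  intros Hi Hf Hpq Hq.
  assert (He : ex_RInt f (-1) 1) by (exists I; auto).
  assert (He1 : ex_RInt f (-1) q) by (apply (ex_RInt_Chasles_1 f (-1) q 1); auto; lra).
  assert (He2 : ex_RInt f p q) by (apply (ex_RInt_Chasles_2 f (-1) p q); auto; lra).
  assert (He3 : ex_RInt f (-1) p) by (apply (ex_RInt_Chasles_1 f (-1) p q); auto; lra).
  assert (He4 : ex_RInt f q 1) by (apply (ex_RInt_Chasles_2 f (-1) q 1); auto; lra).
  split; auto.
  pose proof (RInt_Chasles f (-1) p q He3 He2) as C1.
  pose proof (RInt_Chasles f (-1) q 1 He1 He4) as C2.
  rewrite (is_RInt_unique _ _ _ _ Hi) in C2.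
  unfold plus in C1, C2; simpl in C1, C2.
  pose proof (RInt_ge_0 f (-1) p ltac:(lra) He3 (fun x _ => Hf x)).
  pose proof (RInt_ge_0 f q 1 ltac:(lra) He4 (fun x _ => Hf x)).
  lra.
Qed.

Lemma tri_right (f : R -> R) x l v Qa : 0 < l -> ex_RInt f x (x + l) ->
  (forall s, x < s < x + l -> Qa * (v * (1 - (s - x) / l)) ^ 2 <= f s) ->
  Qa * v ^ 2 * l / 3 <= RInt f x (x + l).
Proof.
  intros Hl He Hle.
  set (g := fun s => Qa * (v * (1 - (s - x) / l)) ^ 2).
  set (F := fun s => - (Qa * v ^ 2 * l / 3) * (1 - (s - x) / l) ^ 3).
  assert (Hg : is_RInt g x (x + l) (Qa * v ^ 2 * l / 3)).
  { replace (Qa * v ^ 2 * l / 3) with (minus (F (x + l)) (F x)).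
    - apply (is_RInt_derive (V:=R_CompleteNormedModule) F g).
      + intros y Hy. unfold F, g. auto_derive. auto. field. lra.
      + intros y Hy. unfold g. apply (ex_derive_continuous (fun s => Qa * (v * (1 - (s - x) / l)) ^ 2)).
        auto_derive. auto.
    - unfold minus, plus, opp, F; simpl. field. lra. }
  rewrite <- (is_RInt_unique _ _ _ _ Hg).
  apply RInt_le; auto. lra. exists (Qa * v ^ 2 * l / 3); auto.
Qed.

Lemma tri_left (f : R -> R) x l v Qa : 0 < l -> ex_RInt f (x - l) x ->
  (forall s, x - l < s < x -> Qa * (v * (1 - (x - s) / l)) ^ 2 <= f s) ->
  Qa * v ^ 2 * l / 3 <= RInt f (x - l) x.
Proof.
  intros Hl He Hle.
  set (g := fun s => Qa * (v * (1 - (x - s) / l)) ^ 2).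
  set (F := fun s => (Qa * v ^ 2 * l / 3) * (1 - (x - s) / l) ^ 3).
  assert (Hg : is_RInt g (x - l) x (Qa * v ^ 2 * l / 3)).
  { replace (Qa * v ^ 2 * l / 3) with (minus (F x) (F (x - l))).
    - apply (is_RInt_derive (V:=R_CompleteNormedModule) F g).
      + intros y Hy. unfold F, g. auto_derive. auto. field. lra.
      + intros y Hy. unfold g. apply (ex_derive_continuous (fun s => Qa * (v * (1 - (x - s) / l)) ^ 2)).
        auto_derive. auto.
    - unfold minus, plus, opp, F; simpl. field. lra. }
  rewrite <- (is_RInt_unique _ _ _ _ Hg).
  apply RInt_le; auto. lra. exists (Qa * v ^ 2 * l / 3); auto.
Qed.

Definition wfun (b : R) (phi : R -> R) (t : R) := rpow (1 + t) (b - 1) * Rabs (phi t) ^ 2.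

Lemma wfun_nonneg b phi t : 0 <= wfun b phi t.
Proof.
  unfold wfun. apply Rmult_le_pos; [|apply pow2_ge_0].
  unfold rpow. destruct (Rle_dec (1 + t) 0); [lra|left; apply exp_pos].
Qed.

Lemma a_bounds b : 3 / 2 <= b -> 0 < (b - 1) / b < 1 /\ 1 - (b - 1) / b = / b.
Proof.
  intros Hb. split; [split|].
  - apply Rdiv_lt_0_compat; lra.
  - apply frac_lt1; lra.
  - field. lra.
Qed.

Lemma pointwise b c al M phi fl H x :
  Setup b c al M phi fl ->
  is_RInt (wfun b phi) (-1) 1 (rpow 2 (b - 1)) ->
  0 <= H -> (forall y, (b - 1) / b <= y < 1 -> Rabs (phi y) <= H) ->
  (b - 1) / b <= x < 1 ->
  Rabs (phi x) ^ 3 <= 3 * Ep (b - 1) 1 / Ep (b - 1) ((b - 1) / b) * al * Ep (b - 1) 1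
                        / Ep b ((b - 1) / b) * H
  \/ Rabs (phi x) ^ 2 <= 3 * Ep (b - 1) 1 / Ep (b - 1) ((b - 1) / b) * (2 * b).
Proof.
  intros S Hi HH0 HH Hx.
  pose proof (S_b _ _ _ _ _ _ S) as Hb.
  destruct (a_bounds b Hb) as [Ha H1a].
  set (a := (b - 1) / b) in *.
  set (E1 := Ep (b - 1) 1). set (Pa := Ep b a). set (Qa := Ep (b - 1) a).
  assert (HE1 : 0 < E1) by apply Ep_pos. assert (HPa : 0 < Pa) by apply Ep_pos.
  assert (HQa : 0 < Qa) by apply Ep_pos.
  pose proof (S_al0 _ _ _ _ _ _ S) as Hal0.
  set (N := 3 * E1 / Qa).
  assert (HN : 0 < N) by (unfold N; apply Rdiv_lt_0_compat; lra).
  set (v := Rabs (phi x)).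
  assert (Hv0 : 0 <= v) by apply Rabs_pos.
  assert (HvH : v <= H) by (apply HH; lra).
  destruct (Req_dec v 0) as [Hv|Hv].
  { right. rewrite Hv. simpl. rewrite Rmult_0_l.
    apply Rmult_le_pos; lra. }
  assert (Hvp : 0 < v) by lra.
  set (L := al * E1 * H / Pa).
  assert (HL : 0 < L) by (unfold L; apply Rdiv_lt_0_compat; [apply Rmult_lt_0_compat; [apply Rmult_lt_0_compat|]|]; lra).
  assert (Hdp : forall u, a <= u < 1 -> Rabs (Derive phi u) <= L).
  { intros u Hu. unfold L.
    apply (dphi_from_flux b c al M phi fl u (al * E1 * H) Pa S); try lra.
    - apply (flux_right b c al M phi fl u); auto; try lra.
      intros u' Hu'. eapply Rle_trans; [apply (dfl_bound b c al M phi fl u' S); lra|].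
      apply Rmult_le_compat_l; [apply Rmult_le_pos; lra|]. apply HH; lra.
    - unfold Pa. apply Ep_mono; lra. }
  assert (Hlip : forall s, a <= s < 1 -> Rabs (phi s - phi x) <= L * Rabs (s - x)).
  { intros s Hs. apply (lip_on phi a (Rmax s x) L).
    - intros u Hu. apply (S_dphi _ _ _ _ _ _ S). revert Hu. apply Rmax_case; lra.
    - intros u Hu. apply Hdp. revert Hu. apply Rmax_case; lra.
    - split; [lra|apply Rmax_l].
    - split; [lra|apply Rmax_r]. }
  set (l0 := (1 - a) / 2).
  set (l := Rmin l0 (v / L)).
  assert (Hl0d : l0 = (1 - a) / 2) by reflexivity.
  assert (Hl0 : 0 < l0) by lra.
  assert (Hl : 0 < l /\ l <= l0 /\ l <= v / L).
  { unfold l. split; [apply Rmin_case; [lra|apply Rdiv_lt_0_compat; lra]|].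
    split; [apply Rmin_l|apply Rmin_r]. }
  assert (HLl : L * l <= v).
  { destruct Hl as [_ [_ Hl2]]. apply (Rmult_le_compat_l L) in Hl2; [|lra].
    replace (L * (v / L)) with v in Hl2 by (field; lra). lra. }
  assert (Hpt : forall s, a <= s < 1 -> Rabs (s - x) <= l ->
            Qa * (v * (1 - Rabs (s - x) / l)) ^ 2 <= wfun b phi s).
  { intros s Hs Hsx. unfold wfun.
    rewrite rpow_Ep by lra.
    assert (HQs : Qa <= Ep (b - 1) s) by (unfold Qa; apply Ep_mono; lra).
    assert (Hlow : 0 <= v * (1 - Rabs (s - x) / l) <= Rabs (phi s)).
    { split.
      - apply Rmult_le_pos; auto. assert (Rabs (s - x) / l <= 1).
        { apply (Rmult_le_reg_r l); [lra|]. unfold Rdiv. rewrite Rmult_assoc, Rinv_l by lra. lra. }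
        lra.
      - pose proof (Hlip s Hs) as Hq.
        assert (L * Rabs (s - x) <= v * (Rabs (s - x) / l)).
        { replace (v * (Rabs (s - x) / l)) with ((v / l) * Rabs (s - x)) by (field; lra).
          apply Rmult_le_compat_r; [apply Rabs_pos|].
          apply (Rmult_le_reg_r l); [lra|]. unfold Rdiv. rewrite Rmult_assoc, Rinv_l by lra. lra. }
        pose proof (Rabs_triang_inv (phi x) (phi s)). rewrite Rabs_minus_sym in Hq.
        fold v in H1. lra. }
    apply Rmult_le_compat; try lra. apply pow2_ge_0.
    apply pow_incr. auto. }
  assert (Hint : Qa * v ^ 2 * l / 3 <= E1).
  { assert (HE1r : rpow 2 (b - 1) = E1) by (unfold E1; rewrite <- rpow_Ep by lra; f_equal; ring).
    rewrite HE1r in Hi.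
    destruct (Rlt_or_le x (a + l0)) as [Hxr|Hxr].
    - destruct (sub_int (wfun b phi) E1 x (x + l) Hi (wfun_nonneg b phi)) as [He Hle]; try lra.
      eapply Rle_trans; [|exact Hle].
      apply tri_right; auto; try lra.
      intros s Hs. replace ((s - x) / l) with (Rabs (s - x) / l) by (rewrite Rabs_right; lra).
      apply Hpt. lra. rewrite Rabs_right; lra.
    - destruct (sub_int (wfun b phi) E1 (x - l) x Hi (wfun_nonneg b phi)) as [He Hle]; try lra.
      eapply Rle_trans; [|exact Hle].
      apply tri_left; auto; try lra.
      intros s Hs. replace ((x - s) / l) with (Rabs (s - x) / l) by (rewrite Rabs_left; [field|]; lra).
      apply Hpt. lra. rewrite Rabs_left; lra. }
  assert (Hvl : v ^ 2 * l <= N).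
  { unfold N. apply (Rmult_le_reg_l (Qa / 3)). apply Rdiv_lt_0_compat; lra.
    replace (Qa / 3 * (3 * E1 / Qa)) with E1 by (field; lra).
    replace (Qa / 3 * (v ^ 2 * l)) with (Qa * v ^ 2 * l / 3) by field. lra. }
  destruct (Rle_or_lt (v / L) l0) as [Hc|Hc].
  - left. assert (Hlq : l = v / L) by (unfold l; apply Rmin_right; auto). rewrite Hlq in Hvl.
    fold v. fold E1 Qa Pa a.
    replace (N * al * E1 / Pa * H) with (N * L) by (unfold N, L; field; lra).
    apply (Rmult_le_reg_r (/ L)). apply Rinv_0_lt_compat; auto.
    replace (N * L * / L) with N by (field; lra).
    replace (v ^ 3 * / L) with (v ^ 2 * (v / L)) by (field; lra). auto.
  - right. assert (Hlq : l = l0) by (unfold l; apply Rmin_left; lra). rewrite Hlq in Hvl.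
    fold v. fold E1 Qa. fold N.
    unfold l0 in Hvl. rewrite H1a in Hvl.
    apply (Rmult_le_reg_r (/ b / 2)). apply Rmult_lt_0_compat; [apply Rinv_0_lt_compat|]; lra.
    replace (N * (2 * b) * (/ b / 2)) with N by (field; lra). lra.
Qed.

Lemma consts b al : 3 / 2 <= b -> b + 1 <= al ->
  3 * Ep (b - 1) 1 / Ep (b - 1) ((b - 1) / b) * al * Ep (b - 1) 1 / Ep b ((b - 1) / b)
    <= 27 / 4 * (2 * Ep b 1) * (b - 1) * al /\
  3 * Ep (b - 1) 1 / Ep (b - 1) ((b - 1) / b) * (2 * b) <= 27 / 4 * (2 * Ep b 1) * (b - 1) * al.
Proof.
  intros Hb Hal.
  pose proof (Pa_ge b Hb) as HP. pose proof (Qa_ge b Hb) as HQ.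
  pose proof (E_ge2 b ltac:(lra)) as HE. rewrite (E_split b) in HP, HQ, HE |- *.
  set (E1 := Ep (b - 1) 1) in *.
  set (P := Ep b ((b - 1) / b)) in *. set (Q := Ep (b - 1) ((b - 1) / b)) in *.
  assert (HE1 : 1 <= E1) by lra.
  assert (HP0 : 0 < P) by lra. assert (HQ0 : 0 < Q) by lra.
  split.
  - replace (3 * E1 / Q * al * E1 / P) with (3 * E1 * E1 * al / (Q * P)) by (field; lra).
    apply Rle_trans with (3 * E1 * E1 * al / (2 / 5 * E1 * (4 / 5 * E1))).
    + unfold Rdiv. apply Rmult_le_compat_l. apply Rmult_le_pos; [|lra]. nra.
      apply Rinv_le_contravar. nra. apply Rmult_le_compat; lra.
    + replace (3 * E1 * E1 * al / (2 / 5 * E1 * (4 / 5 * E1))) with (75 / 8 * al) by (field; lra).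
      assert (27 / 4 * (2 * (2 * E1)) * (b - 1) * al = 27 * (E1 * ((b - 1) * al))) by field.
      assert (1 / 2 * al <= (b - 1) * al) by (apply Rmult_le_compat_r; lra).
      assert (1 / 2 * al <= E1 * ((b - 1) * al)) by nra. lra.
  - apply Rle_trans with (15 * b).
    + replace (3 * E1 / Q * (2 * b)) with (6 * b * (E1 / Q)) by (field; lra).
      replace (15 * b) with (6 * b * (5 / 2)) by field.
      apply Rmult_le_compat_l. lra.
      apply (Rmult_le_reg_r Q); auto. unfold Rdiv. rewrite Rmult_assoc, Rinv_l by lra. lra.
    + assert (27 / 4 * (2 * (2 * E1)) * (b - 1) * al = 27 * E1 * ((b - 1) * al)) by field.
      assert ((b - 1) * (b + 1) <= (b - 1) * al) by (apply Rmult_le_compat_l; lra).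
      assert (Hq0 : 0 <= (b - 1) * al) by (apply Rmult_le_pos; lra).
      assert ((b - 1) * al <= E1 * ((b - 1) * al)).
      { rewrite <- (Rmult_1_l ((b - 1) * al)) at 1. apply Rmult_le_compat_r; lra. }
      nra.
Qed.

Lemma main_bound b c al M phi fl :
  Setup b c al M phi fl ->
  is_RInt (wfun b phi) (-1) 1 (rpow 2 (b - 1)) ->
  forall x, (b - 1) / b <= x < 1 ->
  Rabs (phi x) <= sqrt (27 / 4 * (2 * Ep b 1) * (b - 1) * al).
Proof.
  intros S Hi.
  pose proof (S_b _ _ _ _ _ _ S) as Hb.
  pose proof (alpha_ge b c al M phi fl S Hi) as Hal.
  destruct (consts b al Hb Hal) as [HA HD].
  set (K2 := 27 / 4 * (2 * Ep b 1) * (b - 1) * al) in *.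
  set (A := 3 * Ep (b - 1) 1 / Ep (b - 1) ((b - 1) / b) * al * Ep (b - 1) 1 / Ep b ((b - 1) / b)) in *.
  set (Dc := 3 * Ep (b - 1) 1 / Ep (b - 1) ((b - 1) / b) * (2 * b)) in *.
  destruct (sup_exists (fun y => (b - 1) / b <= y < 1) phi M) as [H [HH0 [HH Hmin]]].
  { intros y Hy. apply (S_M _ _ _ _ _ _ S). destruct (a_bounds b Hb). lra. }
  assert (HK2 : 0 <= K2).
  { destruct (Rle_or_lt 0 Dc); [lra|]. exfalso.
    unfold Dc in H0. pose proof (Ep_pos (b - 1) 1). pose proof (Ep_pos (b - 1) ((b - 1) / b)).
    assert (0 <= 3 * Ep (b - 1) 1 / Ep (b - 1) ((b - 1) / b) * (2 * b)).
    { apply Rmult_le_pos; [|lra]. unfold Rdiv. apply Rmult_le_pos; [lra|]. left; apply Rinv_0_lt_compat; lra. }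
    lra. }
  set (U := sqrt K2).
  assert (HU : 0 <= U) by apply sqrt_pos.
  assert (HU2 : U * U = K2) by (apply sqrt_sqrt; auto).
  assert (Hv2 : forall x, (b - 1) / b <= x < 1 -> Rabs (phi x) ^ 2 <= U * H).
  { intros x Hx. set (v := Rabs (phi x)).
    assert (Hv0 : 0 <= v) by apply Rabs_pos. assert (HvH : v <= H) by (apply HH; auto).
    destruct (Rle_or_lt v U) as [HvU|HvU].
    - assert (v * v <= U * v) by (apply Rmult_le_compat_r; auto).
      assert (U * v <= U * H) by (apply Rmult_le_compat_l; auto).
      simpl. lra.
    - destruct (pointwise b c al M phi fl H x S Hi HH0 HH Hx) as [Hc|Hc]; fold v A Dc in Hc.
      + assert (Hc' : v ^ 3 <= U * U * H).
        { rewrite HU2. eapply Rle_trans; [exact Hc|]. apply Rmult_le_compat_r; auto. }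
        simpl in Hc' |- *. rewrite Rmult_1_r in *.
        assert (Hvp : 0 < v) by lra.
        apply (Rmult_le_reg_r v); auto.
        assert (U * U * H <= U * H * v).
        { replace (U * U * H) with (U * H * U) by ring. apply Rmult_le_compat_l; [apply Rmult_le_pos|]; lra. }
        nra.
      + exfalso. assert (v * v <= U * U) by (simpl in Hc; rewrite HU2; lra). nra. }
  assert (HHU : H <= U).
  { assert (H <= sqrt (U * H)).
    { apply Hmin. apply sqrt_pos. intros x Hx.
      rewrite <- (sqrt_square (Rabs (phi x))) by apply Rabs_pos.
      apply sqrt_le_1_alt. pose proof (Hv2 x Hx). simpl in H0. lra. }
    destruct (Req_dec H 0) as [->|Hne]; [lra|].
    assert (H * H <= U * H).
    { rewrite <- (sqrt_sqrt (U * H)) by (apply Rmult_le_pos; lra).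
      apply Rmult_le_compat; lra. }
    nra. }
  intros x Hx. eapply Rle_trans; [apply HH; auto|]. exact HHU.
Qed.

Lemma beta_ge m d : (1 <= d)%nat -> 1 < beta_md m d -> 3 / 2 <= beta_md m d.
Proof.
  intros Hd Hb. unfold beta_md in *.
  destruct m as [|m].
  - simpl in *. destruct (le_lt_dec d 2) as [Hle|Hlt].
    + apply le_INR in Hle. simpl in Hle. lra.
    + apply le_INR in Hlt. simpl in Hlt. lra.
  - rewrite S_INR in *. pose proof (pos_INR m). apply le_INR in Hd. simpl in Hd. lra.
Qed.

Theorem proposition3p8 (m d : nat) (c alpha : R) (phi : R -> R) :
  (1 <= d)%nat ->
  0 < c ->
  1 < beta_md m d ->
  (* phi is bounded and continuous on [-1,1] *)
  (exists M : R, forall x, -1 <= x <= 1 -> Rabs (phi x) <= M) ->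
  (forall x, -1 <= x <= 1 ->
     filterlim phi (within (fun y => -1 <= y <= 1) (locally x)) (locally (phi x))) ->
  (* phi solves the ODE on (-1,1) *)
  (forall x, -1 < x < 1 -> ex_derive phi x) ->
  (forall x, -1 < x < 1 -> ex_derive (flux m d phi) x) ->
  (forall x, -1 < x < 1 ->
     Derive (flux m d phi) x
     + (alpha - c ^ 2 * (1 + x) / 8) * rpow (1 + x) (beta_md m d - 1) * phi x = 0) ->
  (* normalization *)
  is_RInt (fun t => rpow (1 + t) (beta_md m d - 1) * (Rabs (phi t)) ^ 2) (-1) 1
          (rpow 2 (beta_md m d - 1)) ->
  c ^ 2 / 4 < alpha ->
  forall eta, a_md m d <= eta <= 1 ->
    Rabs (phi eta) <=
      3 * sqrt 3 / 2 * sqrt (rpow 2 (beta_md m d + 1) * (beta_md m d - 1)) * sqrt alpha.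
Proof.
  intros Hd Hc Hb1 [M HM] Hcont Hdphi Hdfl Hode Hnorm Hal eta Heta.
  pose proof (beta_ge m d Hd Hb1) as Hb.
  assert (Ha : a_md m d = (beta_md m d - 1) / beta_md m d).
  { unfold a_md, beta_md in *. field. lra. }
  set (b := beta_md m d) in *.
  assert (S : Setup b c alpha M phi (flux m d phi)).
  { constructor; auto.
    - intros x Hx. unfold flux. fold b. rewrite rpow_Ep by lra. ring.
    - intros x Hx. pose proof (Hode x Hx) as Ho. rewrite rpow_Ep in Ho by lra.
      unfold wf. lra. }
  assert (Hi : is_RInt (wfun b phi) (-1) 1 (rpow 2 (b - 1))) by exact Hnorm.
  assert (Hal0 : 0 < alpha) by (pose proof (pow2_ge_0 c); lra).
  assert (HR : 3 * sqrt 3 / 2 * sqrt (rpow 2 (b + 1) * (b - 1)) * sqrt alpha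
               = sqrt (27 / 4 * (2 * Ep b 1) * (b - 1) * alpha)).
  { assert (Hr : rpow 2 (b + 1) = 2 * Ep b 1).
    { replace 2 with (1 + 1) at 1 by ring. rewrite rpow_Ep by lra.
      rewrite (Ep_split (b + 1) 1) by lra. replace (b + 1 - 1) with b by ring. ring. }
    rewrite Hr. pose proof (Ep_pos b 1).
    replace (27 / 4 * (2 * Ep b 1) * (b - 1) * alpha) with (27 / 4 * ((2 * Ep b 1) * (b - 1)) * alpha) by ring.
    assert (HX : 0 <= 2 * Ep b 1 * (b - 1)) by nra.
    rewrite (sqrt_mult_alt (27 / 4 * (2 * Ep b 1 * (b - 1))) alpha) by nra.
    rewrite (sqrt_mult_alt (27 / 4) (2 * Ep b 1 * (b - 1))) by lra.
    assert (H27 : sqrt (27 / 4) = 3 * sqrt 3 / 2).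
    { rewrite <- (sqrt_square (3 * sqrt 3 / 2)).
      - f_equal. replace (3 * sqrt 3 / 2 * (3 * sqrt 3 / 2)) with (9 / 4 * (sqrt 3 * sqrt 3)) by field.
        rewrite sqrt_sqrt by lra. field.
      - pose proof (sqrt_pos 3). lra. }
    rewrite H27. reflexivity. }
  rewrite HR. rewrite Ha in Heta.
  destruct (Rlt_or_le eta 1) as [Hlt|Hge].
  - apply (main_bound b c alpha M phi (flux m d phi) S Hi). lra.
  - assert (eta = 1) by lra. subst eta.
    set (R := sqrt (27 / 4 * (2 * Ep b 1) * (b - 1) * alpha)).
    destruct (Rle_or_lt (Rabs (phi 1)) R) as [|Hgt]; auto. exfalso.
    destruct (near_within phi (fun y => -1 <= y <= 1) 1 (Rabs (phi 1) - R) (Hcont 1 ltac:(lra)))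
      as [del [Hdel Hn]]; [lra|].
    destruct (a_bounds b Hb) as [Hab _].
    set (y := Rmax ((b - 1) / b) (1 - del / 2)).
    assert (Hy : (b - 1) / b <= y < 1 /\ 1 - del / 2 <= y).
    { unfold y. split; [split; [apply Rmax_l|]|apply Rmax_r]. apply Rmax_case; lra. }
    assert (H1 : Rabs (phi y) <= R) by (apply (main_bound b c alpha M phi (flux m d phi) S Hi); lra).
    assert (H2 : Rabs (phi y - phi 1) < Rabs (phi 1) - R).
    { apply Hn. rewrite Rabs_left by lra. lra. lra. }
    pose proof (Rabs_triang_inv (phi 1) (phi y)). rewrite Rabs_minus_sym in H2. lra.
Qed.
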